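(* The Hilbert series of the coordinate ring of the cone of ${\mathrm{O}}(3)$ is \[\mathrm{H}(\mathcal{O}(\mathcal{C}({\mathrm{O}}(3)));t)=-t+\sum_{d=0}^\infty\binom{2d+3}{3}t^{d}=\frac{1+5t+5t^2-6t^3+4t^4-t^5}{(1-t)^4}.\]
   Context: ${\mathrm{O}}(3)=\{M\in\mathbb{C}^{3\times3}\mid M^TM=I\}$. The cone $\mathcal{C}({\mathrm{O}}(3))$ is the Zariski closure in $\mathbb{C}^{3\times 3}$ of $\{cM\mid c\in\mathbb{C},M\in{\mathrm{O}}(3)\}$; its coordinate ring is the quotient of the standard graded polynomial ring $\mathbb{C}[x_{ij}\mid 1\le i,j\le 3]$ by the homogeneous vanishing ideal of the cone, with the induced grading. The Hilbert series of a graded algebra $A=\bigoplus_dA_d$ is $\sum_d\dim_{\mathbb{C}}(A_d)t^d$. *)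

(* Defs.v *)
From HB Require Import structures.
From mathcomp Require Import all_boot all_order all_algebra.
From mathcomp Require Import reals.
From mathcomp Require Import complex.
From mathcomp Require Import mpoly.
Set Implicit Arguments. Unset Strict Implicit. Unset Printing Implicit Defensive.
Import Order.TTheory GRing.Theory Num.Theory.
Local Open Scope ring_scope.

Definition CC (R : realType) := complex R.

(* Polynomial ring C[x_ij | 1 <= i,j <= 3]; variable x_ij is the variable
   of index mxvec_index i j in 'I_(3*3). *)
Definition poly9 (R : realType) := {mpoly CC R[3 * 3]}.

Definition evalM (R : realType) (p : poly9 R) (M : 'M[CC R]_3) : CC R :=
  p.@[fun k => mxvec M 0 k].

Definition inO3 (R : realType) (M : 'M[CC R]_3) : Prop := M^T *m M = 1%:M.

Definition vanishes_on (R : realType) (S : 'M[CC R]_3 -> Prop) (p : poly9 R) : Prop :=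
  forall M, S M -> evalM p M = 0.

Definition zariski_closure (R : realType) (S : 'M[CC R]_3 -> Prop) : 'M[CC R]_3 -> Prop :=
  fun N => forall p, vanishes_on S p -> evalM p N = 0.

Definition coneO3 (R : realType) : 'M[CC R]_3 -> Prop :=
  zariski_closure (fun N => exists (c : CC R) (M : 'M[CC R]_3), inO3 M /\ N = c *: M).

(* A family ps_0..ps_{n-1} of degree-d forms that is linearly independent
   modulo the vanishing ideal of the cone, i.e. whose images in the degree-d
   part A_d of the coordinate ring are linearly independent. *)
Definition indep_mod_cone (R : realType) (d n : nat) (ps : 'I_n -> poly9 R) : Prop :=
  (forall i, ps i \is d.-homog) /\
  (forall a : 'I_n -> CC R,
      vanishes_on (@coneO3 R) (\sum_(i < n) a i *: ps i) -> forall i, a i = 0).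

(* dim_C A_d = n, where A_d is the degree-d part of the coordinate ring
   C[x_ij]/I(C(O(3))) : n is the maximal size of a linearly independent family
   in A_d (every element of A_d is the class of a degree-d form). *)
Definition dim_coord_ring_deg (R : realType) (d n : nat) : Prop :=
  (exists ps : 'I_n -> poly9 R, indep_mod_cone d ps) /\
  (forall ps : 'I_n.+1 -> poly9 R, ~ indep_mod_cone d ps).

(* Main.v *)
Require Import Defs.
From HB Require Import structures.
From mathcomp Require Import all_boot all_order all_algebra.
From mathcomp Require Import reals complex mpoly.
From mathcomp Require Import ring zify.
Import Order.TTheory GRing.Theory Num.Theory.
Set Implicit Arguments. Unset Strict Implicit. Unset Printing Implicit Defensive.
Local Open Scope ring_scope.


Lemma sum3 (T : nmodType) (F : 'I_3 -> T) :
  \sum_(k < 3) F k = F (inord 0) + F (inord 1) + F (inord 2).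
Proof.
rewrite !big_ord_recl big_ord0 addr0 addrA; congr (F _ + F _ + F _);
  by apply/val_inj; rewrite /= ?inordK.
Qed.

Lemma sum2 (T : nmodType) (F : 'I_2 -> T) :
  \sum_(k < 2) F k = F (inord 0) + F (inord 1).
Proof.
rewrite !big_ord_recl big_ord0 addr0; congr (F _ + F _);
  by apply/val_inj; rewrite /= ?inordK.
Qed.

Lemma mx3_eq (T : Type) (A B : 'M[T]_3) :
  (forall i j, (i < 3)%N -> (j < 3)%N -> A (inord i) (inord j) = B (inord i) (inord j)) -> A = B.
Proof.
move=> h; apply/matrixP=> i j; rewrite -(inord_val i) -(inord_val j); exact: h.
Qed.

Lemma inord3_eq i j : (i < 3)%N -> (j < 3)%N -> ((inord i : 'I_3) == inord j) = (i == j).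
Proof. by move=> hi hj; rewrite -val_eqE /= !inordK. Qed.

Definition ent (T : Type) n (A : 'M[T]_n.+1) (i j : nat) := A (inord i) (inord j).
Lemma entE (T : Type) n (A : 'M[T]_n.+1) i j : A i j = ent A i j.
Proof. by rewrite /ent !inord_val. Qed.

Section S.
Variable C : comRingType.

Lemma det2 (A : 'M[C]_2) : \det A = ent A 0 0 * ent A 1 1 - ent A 0 1 * ent A 1 0.
Proof.
rewrite (expand_det_row _ (inord 0)) sum2 /cofactor !det_mx11 !mxE !entE /= !inordK //= /bump /= expr0 expr1; ring.
Qed.

Lemma det3 (A : 'M[C]_3) : \det A =
  ent A 0 0 * (ent A 1 1 * ent A 2 2 - ent A 1 2 * ent A 2 1)
  - ent A 0 1 * (ent A 1 0 * ent A 2 2 - ent A 1 2 * ent A 2 0)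
  + ent A 0 2 * (ent A 1 0 * ent A 2 1 - ent A 1 1 * ent A 2 0).
Proof.
rewrite (expand_det_row _ (inord 0)) sum3 /cofactor !det2 /ent !mxE !entE /= !inordK //= /bump /= !(add0n, addn0, add1n); ring.
Qed.
End S.

Definition phiE (T : comRingType) (w x y z : T) (i j : nat) : T :=
  match i, j with
  | 0, 0 => w*w + x*x - y*y - z*z
  | 0, 1 => (x*y - w*z) *+ 2
  | 0, 2 => (x*z + w*y) *+ 2
  | 1, 0 => (x*y + w*z) *+ 2
  | 1, 1 => w*w - x*x + y*y - z*z
  | 1, 2 => (y*z - w*x) *+ 2
  | 2, 0 => (x*z - w*y) *+ 2
  | 2, 1 => (y*z + w*x) *+ 2
  | _, _ => w*w - x*x - y*y + z*z
  end.

Definition Phimx (T : comRingType) (w x y z : T) : 'M[T]_3 :=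
  \matrix_(i < 3, j < 3) phiE w x y z i j.

Section Cert.
Variable F : fieldType.
Lemma so3_cert0 (N : 'M[F]_3)
  (hO00 : (- 1 + (ent N 2 0) * (ent N 2 0) + (ent N 1 0) * (ent N 1 0) + (ent N 0 0) * (ent N 0 0)) = 0)
  (hO01 : ((ent N 2 0) * (ent N 2 1) + (ent N 1 0) * (ent N 1 1) + (ent N 0 0) * (ent N 0 1)) = 0)
  (hO02 : ((ent N 2 0) * (ent N 2 2) + (ent N 1 0) * (ent N 1 2) + (ent N 0 0) * (ent N 0 2)) = 0)
  (hO11 : (- 1 + (ent N 2 1) * (ent N 2 1) + (ent N 1 1) * (ent N 1 1) + (ent N 0 1) * (ent N 0 1)) = 0)
  (hO12 : ((ent N 2 1) * (ent N 2 2) + (ent N 1 1) * (ent N 1 2) + (ent N 0 1) * (ent N 0 2)) = 0)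
  (hO22 : (- 1 + (ent N 2 2) * (ent N 2 2) + (ent N 1 2) * (ent N 1 2) + (ent N 0 2) * (ent N 0 2)) = 0)
  (hP00 : (- 1 + (ent N 0 2) * (ent N 0 2) + (ent N 0 1) * (ent N 0 1) + (ent N 0 0) * (ent N 0 0)) = 0)
  (hP01 : ((ent N 0 2) * (ent N 1 2) + (ent N 0 1) * (ent N 1 1) + (ent N 0 0) * (ent N 1 0)) = 0)
  (hP02 : ((ent N 0 2) * (ent N 2 2) + (ent N 0 1) * (ent N 2 1) + (ent N 0 0) * (ent N 2 0)) = 0)
  (hP11 : (- 1 + (ent N 1 2) * (ent N 1 2) + (ent N 1 1) * (ent N 1 1) + (ent N 1 0) * (ent N 1 0)) = 0)
  (hP12 : ((ent N 1 2) * (ent N 2 2) + (ent N 1 1) * (ent N 2 1) + (ent N 1 0) * (ent N 2 0)) = 0)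
  (hP22 : (- 1 + (ent N 2 2) * (ent N 2 2) + (ent N 2 1) * (ent N 2 1) + (ent N 2 0) * (ent N 2 0)) = 0)
  (hC00 : (- (ent N 1 2) * (ent N 2 1) + (ent N 1 1) * (ent N 2 2) - (ent N 0 0)) = 0)
  (hC01 : ((ent N 1 2) * (ent N 2 0) - (ent N 1 0) * (ent N 2 2) - (ent N 0 1)) = 0)
  (hC02 : (- (ent N 1 1) * (ent N 2 0) + (ent N 1 0) * (ent N 2 1) - (ent N 0 2)) = 0)
  (hC10 : (- (ent N 1 0) + (ent N 0 2) * (ent N 2 1) - (ent N 0 1) * (ent N 2 2)) = 0)
  (hC11 : (- (ent N 1 1) - (ent N 0 2) * (ent N 2 0) + (ent N 0 0) * (ent N 2 2)) = 0)
  (hC12 : (- (ent N 1 2) + (ent N 0 1) * (ent N 2 0) - (ent N 0 0) * (ent N 2 1)) = 0)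
  (hC20 : (- (ent N 2 0) - (ent N 0 2) * (ent N 1 1) + (ent N 0 1) * (ent N 1 2)) = 0)
  (hC21 : (- (ent N 2 1) + (ent N 0 2) * (ent N 1 0) - (ent N 0 0) * (ent N 1 2)) = 0)
  (hC22 : (- (ent N 2 2) - (ent N 0 1) * (ent N 1 0) + (ent N 0 0) * (ent N 1 1)) = 0)
  : Phimx (1 + (ent N 2 2) + (ent N 1 1) + (ent N 0 0)) ((ent N 2 1) - (ent N 1 2)) (- (ent N 2 0) + (ent N 0 2)) ((ent N 1 0) - (ent N 0 1)) = (4%:R * (1 + (ent N 2 2) + (ent N 1 1) + (ent N 0 0))) *: N.
Proof.
apply/mx3_eq => -[|[|[|i]]] // -[|[|[|j]]] // _ _; rewrite !mxE !entE ?inordK //=.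
- apply/eqP; rewrite -subr_eq0; apply/eqP.
  transitivity ((- 1) * (- 1 + (ent N 2 0) * (ent N 2 0) + (ent N 1 0) * (ent N 1 0) + (ent N 0 0) * (ent N 0 0)) + (1) * (- 1 + (ent N 2 1) * (ent N 2 1) + (ent N 1 1) * (ent N 1 1) + (ent N 0 1) * (ent N 0 1)) + (1) * (- 1 + (ent N 2 2) * (ent N 2 2) + (ent N 1 2) * (ent N 1 2) + (ent N 0 2) * (ent N 0 2)) + (- 2%:R) * (- 1 + (ent N 0 2) * (ent N 0 2) + (ent N 0 1) * (ent N 0 1) + (ent N 0 0) * (ent N 0 0)) + (2%:R) * (- (ent N 1 2) * (ent N 2 1) + (ent N 1 1) * (ent N 2 2) - (ent N 0 0)) + (- 2%:R) * (- (ent N 1 1) - (ent N 0 2) * (ent N 2 0) + (ent N 0 0) * (ent N 2 2)) + (- 2%:R) * (- (ent N 2 2) - (ent N 0 1) * (ent N 1 0) + (ent N 0 0) * (ent N 1 1))); first ring.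
  by rewrite hO00 hO11 hO22 hP00 hC00 hC11 hC22; ring.
- apply/eqP; rewrite -subr_eq0; apply/eqP.
  transitivity ((- 2%:R) * ((ent N 2 0) * (ent N 2 1) + (ent N 1 0) * (ent N 1 1) + (ent N 0 0) * (ent N 0 1)) + (- 2%:R) * ((ent N 0 2) * (ent N 1 2) + (ent N 0 1) * (ent N 1 1) + (ent N 0 0) * (ent N 1 0)) + (2%:R) * ((ent N 1 2) * (ent N 2 0) - (ent N 1 0) * (ent N 2 2) - (ent N 0 1)) + (2%:R) * (- (ent N 1 0) + (ent N 0 2) * (ent N 2 1) - (ent N 0 1) * (ent N 2 2))); first ring.
  by rewrite hO01 hP01 hC01 hC10; ring.
- apply/eqP; rewrite -subr_eq0; apply/eqP.
  transitivity ((- 2%:R) * ((ent N 2 0) * (ent N 2 2) + (ent N 1 0) * (ent N 1 2) + (ent N 0 0) * (ent N 0 2)) + (- 2%:R) * ((ent N 0 2) * (ent N 2 2) + (ent N 0 1) * (ent N 2 1) + (ent N 0 0) * (ent N 2 0)) + (2%:R) * (- (ent N 1 1) * (ent N 2 0) + (ent N 1 0) * (ent N 2 1) - (ent N 0 2)) + (2%:R) * (- (ent N 2 0) - (ent N 0 2) * (ent N 1 1) + (ent N 0 1) * (ent N 1 2))); first ring.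
  by rewrite hO02 hP02 hC02 hC20; ring.
- apply/eqP; rewrite -subr_eq0; apply/eqP.
  transitivity ((- 2%:R) * ((ent N 2 0) * (ent N 2 1) + (ent N 1 0) * (ent N 1 1) + (ent N 0 0) * (ent N 0 1)) + (- 2%:R) * ((ent N 0 2) * (ent N 1 2) + (ent N 0 1) * (ent N 1 1) + (ent N 0 0) * (ent N 1 0)) + (2%:R) * ((ent N 1 2) * (ent N 2 0) - (ent N 1 0) * (ent N 2 2) - (ent N 0 1)) + (2%:R) * (- (ent N 1 0) + (ent N 0 2) * (ent N 2 1) - (ent N 0 1) * (ent N 2 2))); first ring.
  by rewrite hO01 hP01 hC01 hC10; ring.
- apply/eqP; rewrite -subr_eq0; apply/eqP.
  transitivity ((1) * (- 1 + (ent N 2 0) * (ent N 2 0) + (ent N 1 0) * (ent N 1 0) + (ent N 0 0) * (ent N 0 0)) + (- 1) * (- 1 + (ent N 2 1) * (ent N 2 1) + (ent N 1 1) * (ent N 1 1) + (ent N 0 1) * (ent N 0 1)) + (1) * (- 1 + (ent N 2 2) * (ent N 2 2) + (ent N 1 2) * (ent N 1 2) + (ent N 0 2) * (ent N 0 2)) + (- 2%:R) * (- 1 + (ent N 1 2) * (ent N 1 2) + (ent N 1 1) * (ent N 1 1) + (ent N 1 0) * (ent N 1 0)) + (- 2%:R) * (- (ent N 1 2) * (ent N 2 1) + (ent N 1 1) * (ent N 2 2) - (ent N 0 0)) + (2%:R) * (- (ent N 1 1) - (ent N 0 2) * (ent N 2 0) + (ent N 0 0) * (ent N 2 2)) + (-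 2%:R) * (- (ent N 2 2) - (ent N 0 1) * (ent N 1 0) + (ent N 0 0) * (ent N 1 1))); first ring.
  by rewrite hO00 hO11 hO22 hP11 hC00 hC11 hC22; ring.
- apply/eqP; rewrite -subr_eq0; apply/eqP.
  transitivity ((- 2%:R) * ((ent N 2 1) * (ent N 2 2) + (ent N 1 1) * (ent N 1 2) + (ent N 0 1) * (ent N 0 2)) + (- 2%:R) * ((ent N 1 2) * (ent N 2 2) + (ent N 1 1) * (ent N 2 1) + (ent N 1 0) * (ent N 2 0)) + (2%:R) * (- (ent N 1 2) + (ent N 0 1) * (ent N 2 0) - (ent N 0 0) * (ent N 2 1)) + (2%:R) * (- (ent N 2 1) + (ent N 0 2) * (ent N 1 0) - (ent N 0 0) * (ent N 1 2))); first ring.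
  by rewrite hO12 hP12 hC12 hC21; ring.
- apply/eqP; rewrite -subr_eq0; apply/eqP.
  transitivity ((- 2%:R) * ((ent N 2 0) * (ent N 2 2) + (ent N 1 0) * (ent N 1 2) + (ent N 0 0) * (ent N 0 2)) + (- 2%:R) * ((ent N 0 2) * (ent N 2 2) + (ent N 0 1) * (ent N 2 1) + (ent N 0 0) * (ent N 2 0)) + (2%:R) * (- (ent N 1 1) * (ent N 2 0) + (ent N 1 0) * (ent N 2 1) - (ent N 0 2)) + (2%:R) * (- (ent N 2 0) - (ent N 0 2) * (ent N 1 1) + (ent N 0 1) * (ent N 1 2))); first ring.
  by rewrite hO02 hP02 hC02 hC20; ring.
- apply/eqP; rewrite -subr_eq0; apply/eqP.
  transitivity ((- 2%:R) * ((ent N 2 1) * (ent N 2 2) + (ent N 1 1) * (ent N 1 2) + (ent N 0 1) * (ent N 0 2)) + (- 2%:R) * ((ent N 1 2) * (ent N 2 2) + (ent N 1 1) * (ent N 2 1) + (ent N 1 0) * (ent N 2 0)) + (2%:R) * (- (ent N 1 2) + (ent N 0 1) * (ent N 2 0) - (ent N 0 0) * (ent N 2 1)) + (2%:R) * (- (ent N 2 1) + (ent N 0 2) * (ent N 1 0) - (ent N 0 0) * (ent N 1 2))); first ring.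
  by rewrite hO12 hP12 hC12 hC21; ring.
- apply/eqP; rewrite -subr_eq0; apply/eqP.
  transitivity ((- 1) * (- 1 + (ent N 2 0) * (ent N 2 0) + (ent N 1 0) * (ent N 1 0) + (ent N 0 0) * (ent N 0 0)) + (- 1) * (- 1 + (ent N 2 1) * (ent N 2 1) + (ent N 1 1) * (ent N 1 1) + (ent N 0 1) * (ent N 0 1)) + (- 3%:R) * (- 1 + (ent N 2 2) * (ent N 2 2) + (ent N 1 2) * (ent N 1 2) + (ent N 0 2) * (ent N 0 2)) + (2%:R) * (- 1 + (ent N 0 2) * (ent N 0 2) + (ent N 0 1) * (ent N 0 1) + (ent N 0 0) * (ent N 0 0)) + (2%:R) * (- 1 + (ent N 1 2) * (ent N 1 2) + (ent N 1 1) * (ent N 1 1) + (ent N 1 0) * (ent N 1 0)) + (- 2%:R) * (- (ent N 1 2) * (ent N 2 1) + (ent N 1 1) * (ent N 2 2) - (ent N 0 0)) + (- 2%:R) * (- (ent N 1 1) - (ent N 0 2) * (ent N 2 0) + (ent N 0 0) * (ent N 2 2)) + (2%:R) * (- (ent N 2 2) - (ent N 0 1) * (ent N 1 0) + (ent N 0 0) * (ent N 1 1))); first ring.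
  by rewrite hO00 hO11 hO22 hP00 hP11 hC00 hC11 hC22; ring.
Qed.

Lemma so3_cert1 (N : 'M[F]_3)
  (hO00 : (- 1 + (ent N 2 0) * (ent N 2 0) + (ent N 1 0) * (ent N 1 0) + (ent N 0 0) * (ent N 0 0)) = 0)
  (hO01 : ((ent N 2 0) * (ent N 2 1) + (ent N 1 0) * (ent N 1 1) + (ent N 0 0) * (ent N 0 1)) = 0)
  (hO02 : ((ent N 2 0) * (ent N 2 2) + (ent N 1 0) * (ent N 1 2) + (ent N 0 0) * (ent N 0 2)) = 0)
  (hO11 : (- 1 + (ent N 2 1) * (ent N 2 1) + (ent N 1 1) * (ent N 1 1) + (ent N 0 1) * (ent N 0 1)) = 0)
  (hO12 : ((ent N 2 1) * (ent N 2 2) + (ent N 1 1) * (ent N 1 2) + (ent N 0 1) * (ent N 0 2)) = 0)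
  (hO22 : (- 1 + (ent N 2 2) * (ent N 2 2) + (ent N 1 2) * (ent N 1 2) + (ent N 0 2) * (ent N 0 2)) = 0)
  (hP00 : (- 1 + (ent N 0 2) * (ent N 0 2) + (ent N 0 1) * (ent N 0 1) + (ent N 0 0) * (ent N 0 0)) = 0)
  (hP01 : ((ent N 0 2) * (ent N 1 2) + (ent N 0 1) * (ent N 1 1) + (ent N 0 0) * (ent N 1 0)) = 0)
  (hP02 : ((ent N 0 2) * (ent N 2 2) + (ent N 0 1) * (ent N 2 1) + (ent N 0 0) * (ent N 2 0)) = 0)
  (hP11 : (- 1 + (ent N 1 2) * (ent N 1 2) + (ent N 1 1) * (ent N 1 1) + (ent N 1 0) * (ent N 1 0)) = 0)
  (hP12 : ((ent N 1 2) * (ent N 2 2) + (ent N 1 1) * (ent N 2 1) + (ent N 1 0) * (ent N 2 0)) = 0)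
  (hP22 : (- 1 + (ent N 2 2) * (ent N 2 2) + (ent N 2 1) * (ent N 2 1) + (ent N 2 0) * (ent N 2 0)) = 0)
  (hC00 : (- (ent N 1 2) * (ent N 2 1) + (ent N 1 1) * (ent N 2 2) - (ent N 0 0)) = 0)
  (hC01 : ((ent N 1 2) * (ent N 2 0) - (ent N 1 0) * (ent N 2 2) - (ent N 0 1)) = 0)
  (hC02 : (- (ent N 1 1) * (ent N 2 0) + (ent N 1 0) * (ent N 2 1) - (ent N 0 2)) = 0)
  (hC10 : (- (ent N 1 0) + (ent N 0 2) * (ent N 2 1) - (ent N 0 1) * (ent N 2 2)) = 0)
  (hC11 : (- (ent N 1 1) - (ent N 0 2) * (ent N 2 0) + (ent N 0 0) * (ent N 2 2)) = 0)
  (hC12 : (- (ent N 1 2) + (ent N 0 1) * (ent N 2 0) - (ent N 0 0) * (ent N 2 1)) = 0)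
  (hC20 : (- (ent N 2 0) - (ent N 0 2) * (ent N 1 1) + (ent N 0 1) * (ent N 1 2)) = 0)
  (hC21 : (- (ent N 2 1) + (ent N 0 2) * (ent N 1 0) - (ent N 0 0) * (ent N 1 2)) = 0)
  (hC22 : (- (ent N 2 2) - (ent N 0 1) * (ent N 1 0) + (ent N 0 0) * (ent N 1 1)) = 0)
  : Phimx ((ent N 2 1) - (ent N 1 2)) (1 - (ent N 2 2) - (ent N 1 1) + (ent N 0 0)) ((ent N 1 0) + (ent N 0 1)) ((ent N 2 0) + (ent N 0 2)) = (4%:R * (1 - (ent N 2 2) - (ent N 1 1) + (ent N 0 0))) *: N.
Proof.
apply/mx3_eq => -[|[|[|i]]] // -[|[|[|j]]] // _ _; rewrite !mxE !entE ?inordK //=.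
- apply/eqP; rewrite -subr_eq0; apply/eqP.
  transitivity ((- 1) * (- 1 + (ent N 2 0) * (ent N 2 0) + (ent N 1 0) * (ent N 1 0) + (ent N 0 0) * (ent N 0 0)) + (1) * (- 1 + (ent N 2 1) * (ent N 2 1) + (ent N 1 1) * (ent N 1 1) + (ent N 0 1) * (ent N 0 1)) + (1) * (- 1 + (ent N 2 2) * (ent N 2 2) + (ent N 1 2) * (ent N 1 2) + (ent N 0 2) * (ent N 0 2)) + (- 2%:R) * (- 1 + (ent N 0 2) * (ent N 0 2) + (ent N 0 1) * (ent N 0 1) + (ent N 0 0) * (ent N 0 0)) + (2%:R) * (- (ent N 1 2) * (ent N 2 1) + (ent N 1 1) * (ent N 2 2) - (ent N 0 0)) + (2%:R) * (- (ent N 1 1) - (ent N 0 2) * (ent N 2 0) + (ent N 0 0) * (ent N 2 2)) + (2%:R) * (- (ent N 2 2) - (ent N 0 1) * (ent N 1 0) + (ent N 0 0) * (ent N 1 1))); first ring.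
  by rewrite hO00 hO11 hO22 hP00 hC00 hC11 hC22; ring.
- apply/eqP; rewrite -subr_eq0; apply/eqP.
  transitivity ((- 2%:R) * ((ent N 2 0) * (ent N 2 1) + (ent N 1 0) * (ent N 1 1) + (ent N 0 0) * (ent N 0 1)) + (2%:R) * ((ent N 0 2) * (ent N 1 2) + (ent N 0 1) * (ent N 1 1) + (ent N 0 0) * (ent N 1 0)) + (2%:R) * ((ent N 1 2) * (ent N 2 0) - (ent N 1 0) * (ent N 2 2) - (ent N 0 1)) + (- 2%:R) * (- (ent N 1 0) + (ent N 0 2) * (ent N 2 1) - (ent N 0 1) * (ent N 2 2))); first ring.
  by rewrite hO01 hP01 hC01 hC10; ring.
- apply/eqP; rewrite -subr_eq0; apply/eqP.
  transitivity ((- 2%:R) * ((ent N 2 0) * (ent N 2 2) + (ent N 1 0) * (ent N 1 2) + (ent N 0 0) * (ent N 0 2)) + (2%:R) * ((ent N 0 2) * (ent N 2 2) + (ent N 0 1) * (ent N 2 1) + (ent N 0 0) * (ent N 2 0)) + (2%:R) * (- (ent N 1 1) * (ent N 2 0) + (ent N 1 0) * (ent N 2 1) - (ent N 0 2)) + (- 2%:R) * (- (ent N 2 0) - (ent N 0 2) * (ent N 1 1) + (ent N 0 1) * (ent N 1 2))); first ring.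
  by rewrite hO02 hP02 hC02 hC20; ring.
- apply/eqP; rewrite -subr_eq0; apply/eqP.
  transitivity ((2%:R) * ((ent N 2 0) * (ent N 2 1) + (ent N 1 0) * (ent N 1 1) + (ent N 0 0) * (ent N 0 1)) + (- 2%:R) * ((ent N 0 2) * (ent N 1 2) + (ent N 0 1) * (ent N 1 1) + (ent N 0 0) * (ent N 1 0)) + (- 2%:R) * ((ent N 1 2) * (ent N 2 0) - (ent N 1 0) * (ent N 2 2) - (ent N 0 1)) + (2%:R) * (- (ent N 1 0) + (ent N 0 2) * (ent N 2 1) - (ent N 0 1) * (ent N 2 2))); first ring.
  by rewrite hO01 hP01 hC01 hC10; ring.
- apply/eqP; rewrite -subr_eq0; apply/eqP.
  transitivity ((- 1) * (- 1 + (ent N 2 0) * (ent N 2 0) + (ent N 1 0) * (ent N 1 0) + (ent N 0 0) * (ent N 0 0)) + (1) * (- 1 + (ent N 2 1) * (ent N 2 1) + (ent N 1 1) * (ent N 1 1) + (ent N 0 1) * (ent N 0 1)) + (- 1) * (- 1 + (ent N 2 2) * (ent N 2 2) + (ent N 1 2) * (ent N 1 2) + (ent N 0 2) * (ent N 0 2)) + (2%:R) * (- 1 + (ent N 1 2) * (ent N 1 2) + (ent N 1 1) * (ent N 1 1) + (ent N 1 0) * (ent N 1 0)) + (2%:R) * (- (ent N 1 2) * (ent N 2 1) + (ent N 1 1) * (ent N 2 2) - (ent N 0 0)) + (2%:R) * (- (ent N 1 1) - (ent N 0 2) * (ent N 2 0) + (ent N 0 0) * (ent N 2 2)) + (- 2%:R)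 * (- (ent N 2 2) - (ent N 0 1) * (ent N 1 0) + (ent N 0 0) * (ent N 1 1))); first ring.
  by rewrite hO00 hO11 hO22 hP11 hC00 hC11 hC22; ring.
- apply/eqP; rewrite -subr_eq0; apply/eqP.
  transitivity ((2%:R) * ((ent N 2 1) * (ent N 2 2) + (ent N 1 1) * (ent N 1 2) + (ent N 0 1) * (ent N 0 2)) + (2%:R) * ((ent N 1 2) * (ent N 2 2) + (ent N 1 1) * (ent N 2 1) + (ent N 1 0) * (ent N 2 0)) + (2%:R) * (- (ent N 1 2) + (ent N 0 1) * (ent N 2 0) - (ent N 0 0) * (ent N 2 1)) + (2%:R) * (- (ent N 2 1) + (ent N 0 2) * (ent N 1 0) - (ent N 0 0) * (ent N 1 2))); first ring.
  by rewrite hO12 hP12 hC12 hC21; ring.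
- apply/eqP; rewrite -subr_eq0; apply/eqP.
  transitivity ((2%:R) * ((ent N 2 0) * (ent N 2 2) + (ent N 1 0) * (ent N 1 2) + (ent N 0 0) * (ent N 0 2)) + (- 2%:R) * ((ent N 0 2) * (ent N 2 2) + (ent N 0 1) * (ent N 2 1) + (ent N 0 0) * (ent N 2 0)) + (- 2%:R) * (- (ent N 1 1) * (ent N 2 0) + (ent N 1 0) * (ent N 2 1) - (ent N 0 2)) + (2%:R) * (- (ent N 2 0) - (ent N 0 2) * (ent N 1 1) + (ent N 0 1) * (ent N 1 2))); first ring.
  by rewrite hO02 hP02 hC02 hC20; ring.
- apply/eqP; rewrite -subr_eq0; apply/eqP.
  transitivity ((2%:R) * ((ent N 2 1) * (ent N 2 2) + (ent N 1 1) * (ent N 1 2) + (ent N 0 1) * (ent N 0 2)) + (2%:R) * ((ent N 1 2) * (ent N 2 2) + (ent N 1 1) * (ent N 2 1) + (ent N 1 0) * (ent N 2 0)) + (2%:R) * (- (ent N 1 2) + (ent N 0 1) * (ent N 2 0) - (ent N 0 0) * (ent N 2 1)) + (2%:R) * (- (ent N 2 1) + (ent N 0 2) * (ent N 1 0) - (ent N 0 0) * (ent N 1 2))); first ring.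
  by rewrite hO12 hP12 hC12 hC21; ring.
- apply/eqP; rewrite -subr_eq0; apply/eqP.
  transitivity ((1) * (- 1 + (ent N 2 0) * (ent N 2 0) + (ent N 1 0) * (ent N 1 0) + (ent N 0 0) * (ent N 0 0)) + (1) * (- 1 + (ent N 2 1) * (ent N 2 1) + (ent N 1 1) * (ent N 1 1) + (ent N 0 1) * (ent N 0 1)) + (3%:R) * (- 1 + (ent N 2 2) * (ent N 2 2) + (ent N 1 2) * (ent N 1 2) + (ent N 0 2) * (ent N 0 2)) + (- 2%:R) * (- 1 + (ent N 0 2) * (ent N 0 2) + (ent N 0 1) * (ent N 0 1) + (ent N 0 0) * (ent N 0 0)) + (- 2%:R) * (- 1 + (ent N 1 2) * (ent N 1 2) + (ent N 1 1) * (ent N 1 1) + (ent N 1 0) * (ent N 1 0)) + (2%:R) * (- (ent N 1 2) * (ent N 2 1) + (ent N 1 1) * (ent N 2 2) - (ent N 0 0)) + (- 2%:R) * (- (ent N 1 1) - (ent N 0 2) * (ent N 2 0) + (ent N 0 0) * (ent N 2 2)) + (2%:R) * (- (ent N 2 2) - (ent N 0 1) * (ent N 1 0) + (ent N 0 0) * (ent N 1 1))); first ring.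
  by rewrite hO00 hO11 hO22 hP00 hP11 hC00 hC11 hC22; ring.
Qed.

Lemma so3_cert2 (N : 'M[F]_3)
  (hO00 : (- 1 + (ent N 2 0) * (ent N 2 0) + (ent N 1 0) * (ent N 1 0) + (ent N 0 0) * (ent N 0 0)) = 0)
  (hO01 : ((ent N 2 0) * (ent N 2 1) + (ent N 1 0) * (ent N 1 1) + (ent N 0 0) * (ent N 0 1)) = 0)
  (hO02 : ((ent N 2 0) * (ent N 2 2) + (ent N 1 0) * (ent N 1 2) + (ent N 0 0) * (ent N 0 2)) = 0)
  (hO11 : (- 1 + (ent N 2 1) * (ent N 2 1) + (ent N 1 1) * (ent N 1 1) + (ent N 0 1) * (ent N 0 1)) = 0)
  (hO12 : ((ent N 2 1) * (ent N 2 2) + (ent N 1 1) * (ent N 1 2) + (ent N 0 1) * (ent N 0 2)) = 0)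
  (hO22 : (- 1 + (ent N 2 2) * (ent N 2 2) + (ent N 1 2) * (ent N 1 2) + (ent N 0 2) * (ent N 0 2)) = 0)
  (hP00 : (- 1 + (ent N 0 2) * (ent N 0 2) + (ent N 0 1) * (ent N 0 1) + (ent N 0 0) * (ent N 0 0)) = 0)
  (hP01 : ((ent N 0 2) * (ent N 1 2) + (ent N 0 1) * (ent N 1 1) + (ent N 0 0) * (ent N 1 0)) = 0)
  (hP02 : ((ent N 0 2) * (ent N 2 2) + (ent N 0 1) * (ent N 2 1) + (ent N 0 0) * (ent N 2 0)) = 0)
  (hP11 : (- 1 + (ent N 1 2) * (ent N 1 2) + (ent N 1 1) * (ent N 1 1) + (ent N 1 0) * (ent N 1 0)) = 0)
  (hP12 : ((ent N 1 2) * (ent N 2 2) + (ent N 1 1) * (ent N 2 1) + (ent N 1 0) * (ent N 2 0)) = 0)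
  (hP22 : (- 1 + (ent N 2 2) * (ent N 2 2) + (ent N 2 1) * (ent N 2 1) + (ent N 2 0) * (ent N 2 0)) = 0)
  (hC00 : (- (ent N 1 2) * (ent N 2 1) + (ent N 1 1) * (ent N 2 2) - (ent N 0 0)) = 0)
  (hC01 : ((ent N 1 2) * (ent N 2 0) - (ent N 1 0) * (ent N 2 2) - (ent N 0 1)) = 0)
  (hC02 : (- (ent N 1 1) * (ent N 2 0) + (ent N 1 0) * (ent N 2 1) - (ent N 0 2)) = 0)
  (hC10 : (- (ent N 1 0) + (ent N 0 2) * (ent N 2 1) - (ent N 0 1) * (ent N 2 2)) = 0)
  (hC11 : (- (ent N 1 1) - (ent N 0 2) * (ent N 2 0) + (ent N 0 0) * (ent N 2 2)) = 0)
  (hC12 : (- (ent N 1 2) + (ent N 0 1) * (ent N 2 0) - (ent N 0 0) * (ent N 2 1)) = 0)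
  (hC20 : (- (ent N 2 0) - (ent N 0 2) * (ent N 1 1) + (ent N 0 1) * (ent N 1 2)) = 0)
  (hC21 : (- (ent N 2 1) + (ent N 0 2) * (ent N 1 0) - (ent N 0 0) * (ent N 1 2)) = 0)
  (hC22 : (- (ent N 2 2) - (ent N 0 1) * (ent N 1 0) + (ent N 0 0) * (ent N 1 1)) = 0)
  : Phimx (- (ent N 2 0) + (ent N 0 2)) ((ent N 1 0) + (ent N 0 1)) (1 - (ent N 2 2) + (ent N 1 1) - (ent N 0 0)) ((ent N 2 1) + (ent N 1 2)) = (4%:R * (1 - (ent N 2 2) + (ent N 1 1) - (ent N 0 0))) *: N.
Proof.
apply/mx3_eq => -[|[|[|i]]] // -[|[|[|j]]] // _ _; rewrite !mxE !entE ?inordK //=.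
- apply/eqP; rewrite -subr_eq0; apply/eqP.
  transitivity ((1) * (- 1 + (ent N 2 0) * (ent N 2 0) + (ent N 1 0) * (ent N 1 0) + (ent N 0 0) * (ent N 0 0)) + (- 1) * (- 1 + (ent N 2 1) * (ent N 2 1) + (ent N 1 1) * (ent N 1 1) + (ent N 0 1) * (ent N 0 1)) + (- 1) * (- 1 + (ent N 2 2) * (ent N 2 2) + (ent N 1 2) * (ent N 1 2) + (ent N 0 2) * (ent N 0 2)) + (2%:R) * (- 1 + (ent N 0 2) * (ent N 0 2) + (ent N 0 1) * (ent N 0 1) + (ent N 0 0) * (ent N 0 0)) + (2%:R) * (- (ent N 1 2) * (ent N 2 1) + (ent N 1 1) * (ent N 2 2) - (ent N 0 0)) + (2%:R) * (- (ent N 1 1) - (ent N 0 2) * (ent N 2 0) + (ent N 0 0) * (ent N 2 2)) + (- 2%:R) * (- (ent N 2 2) - (ent N 0 1) * (ent N 1 0) + (ent N 0 0) * (ent N 1 1))); first ring.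
  by rewrite hO00 hO11 hO22 hP00 hC00 hC11 hC22; ring.
- apply/eqP; rewrite -subr_eq0; apply/eqP.
  transitivity ((2%:R) * ((ent N 2 0) * (ent N 2 1) + (ent N 1 0) * (ent N 1 1) + (ent N 0 0) * (ent N 0 1)) + (- 2%:R) * ((ent N 0 2) * (ent N 1 2) + (ent N 0 1) * (ent N 1 1) + (ent N 0 0) * (ent N 1 0)) + (2%:R) * ((ent N 1 2) * (ent N 2 0) - (ent N 1 0) * (ent N 2 2) - (ent N 0 1)) + (- 2%:R) * (- (ent N 1 0) + (ent N 0 2) * (ent N 2 1) - (ent N 0 1) * (ent N 2 2))); first ring.
  by rewrite hO01 hP01 hC01 hC10; ring.
- apply/eqP; rewrite -subr_eq0; apply/eqP.
  transitivity ((2%:R) * ((ent N 2 0) * (ent N 2 2) + (ent N 1 0) * (ent N 1 2) + (ent N 0 0) * (ent N 0 2)) + (2%:R) * ((ent N 0 2) * (ent N 2 2) + (ent N 0 1) * (ent N 2 1) + (ent N 0 0) * (ent N 2 0)) + (2%:R) * (- (ent N 1 1) * (ent N 2 0) + (ent N 1 0) * (ent N 2 1) - (ent N 0 2)) + (2%:R) * (- (ent N 2 0) - (ent N 0 2) * (ent N 1 1) + (ent N 0 1) * (ent N 1 2))); first ring.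
  by rewrite hO02 hP02 hC02 hC20; ring.
- apply/eqP; rewrite -subr_eq0; apply/eqP.
  transitivity ((- 2%:R) * ((ent N 2 0) * (ent N 2 1) + (ent N 1 0) * (ent N 1 1) + (ent N 0 0) * (ent N 0 1)) + (2%:R) * ((ent N 0 2) * (ent N 1 2) + (ent N 0 1) * (ent N 1 1) + (ent N 0 0) * (ent N 1 0)) + (- 2%:R) * ((ent N 1 2) * (ent N 2 0) - (ent N 1 0) * (ent N 2 2) - (ent N 0 1)) + (2%:R) * (- (ent N 1 0) + (ent N 0 2) * (ent N 2 1) - (ent N 0 1) * (ent N 2 2))); first ring.
  by rewrite hO01 hP01 hC01 hC10; ring.
- apply/eqP; rewrite -subr_eq0; apply/eqP.
  transitivity ((1) * (- 1 + (ent N 2 0) * (ent N 2 0) + (ent N 1 0) * (ent N 1 0) + (ent N 0 0) * (ent N 0 0)) + (- 1) * (- 1 + (ent N 2 1) * (ent N 2 1) + (ent N 1 1) * (ent N 1 1) + (ent N 0 1) * (ent N 0 1)) + (1) * (- 1 + (ent N 2 2) * (ent N 2 2) + (ent N 1 2) * (ent N 1 2) + (ent N 0 2) * (ent N 0 2)) + (- 2%:R) * (- 1 + (ent N 1 2) * (ent N 1 2) + (ent N 1 1) * (ent N 1 1) + (ent N 1 0) * (ent N 1 0)) + (2%:R) * (- (ent N 1 2) * (ent N 2 1) + (ent N 1 1) * (ent N 2 2) - (ent N 0 0)) + (2%:R) * (- (ent N 1 1) - (ent N 0 2) * (ent N 2 0) + (ent N 0 0) * (ent N 2 2)) + (2%:R)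 * (- (ent N 2 2) - (ent N 0 1) * (ent N 1 0) + (ent N 0 0) * (ent N 1 1))); first ring.
  by rewrite hO00 hO11 hO22 hP11 hC00 hC11 hC22; ring.
- apply/eqP; rewrite -subr_eq0; apply/eqP.
  transitivity ((- 2%:R) * ((ent N 2 1) * (ent N 2 2) + (ent N 1 1) * (ent N 1 2) + (ent N 0 1) * (ent N 0 2)) + (2%:R) * ((ent N 1 2) * (ent N 2 2) + (ent N 1 1) * (ent N 2 1) + (ent N 1 0) * (ent N 2 0)) + (2%:R) * (- (ent N 1 2) + (ent N 0 1) * (ent N 2 0) - (ent N 0 0) * (ent N 2 1)) + (- 2%:R) * (- (ent N 2 1) + (ent N 0 2) * (ent N 1 0) - (ent N 0 0) * (ent N 1 2))); first ring.
  by rewrite hO12 hP12 hC12 hC21; ring.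
- apply/eqP; rewrite -subr_eq0; apply/eqP.
  transitivity ((2%:R) * ((ent N 2 0) * (ent N 2 2) + (ent N 1 0) * (ent N 1 2) + (ent N 0 0) * (ent N 0 2)) + (2%:R) * ((ent N 0 2) * (ent N 2 2) + (ent N 0 1) * (ent N 2 1) + (ent N 0 0) * (ent N 2 0)) + (2%:R) * (- (ent N 1 1) * (ent N 2 0) + (ent N 1 0) * (ent N 2 1) - (ent N 0 2)) + (2%:R) * (- (ent N 2 0) - (ent N 0 2) * (ent N 1 1) + (ent N 0 1) * (ent N 1 2))); first ring.
  by rewrite hO02 hP02 hC02 hC20; ring.
- apply/eqP; rewrite -subr_eq0; apply/eqP.
  transitivity ((2%:R) * ((ent N 2 1) * (ent N 2 2) + (ent N 1 1) * (ent N 1 2) + (ent N 0 1) * (ent N 0 2)) + (- 2%:R) * ((ent N 1 2) * (ent N 2 2) + (ent N 1 1) * (ent N 2 1) + (ent N 1 0) * (ent N 2 0)) + (- 2%:R) * (- (ent N 1 2) + (ent N 0 1) * (ent N 2 0) - (ent N 0 0) * (ent N 2 1)) + (2%:R) * (- (ent N 2 1) + (ent N 0 2) * (ent N 1 0) - (ent N 0 0) * (ent N 1 2))); first ring.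
  by rewrite hO12 hP12 hC12 hC21; ring.
- apply/eqP; rewrite -subr_eq0; apply/eqP.
  transitivity ((1) * (- 1 + (ent N 2 0) * (ent N 2 0) + (ent N 1 0) * (ent N 1 0) + (ent N 0 0) * (ent N 0 0)) + (1) * (- 1 + (ent N 2 1) * (ent N 2 1) + (ent N 1 1) * (ent N 1 1) + (ent N 0 1) * (ent N 0 1)) + (3%:R) * (- 1 + (ent N 2 2) * (ent N 2 2) + (ent N 1 2) * (ent N 1 2) + (ent N 0 2) * (ent N 0 2)) + (- 2%:R) * (- 1 + (ent N 0 2) * (ent N 0 2) + (ent N 0 1) * (ent N 0 1) + (ent N 0 0) * (ent N 0 0)) + (- 2%:R) * (- 1 + (ent N 1 2) * (ent N 1 2) + (ent N 1 1) * (ent N 1 1) + (ent N 1 0) * (ent N 1 0)) + (- 2%:R) * (- (ent N 1 2) * (ent N 2 1) + (ent N 1 1) * (ent N 2 2) - (ent N 0 0)) + (2%:R) * (- (ent N 1 1) - (ent N 0 2) * (ent N 2 0) + (ent N 0 0) * (ent N 2 2)) + (2%:R) * (- (ent N 2 2) - (ent N 0 1) * (ent N 1 0) + (ent N 0 0) * (ent N 1 1))); first ring.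
  by rewrite hO00 hO11 hO22 hP00 hP11 hC00 hC11 hC22; ring.
Qed.

Lemma so3_cert3 (N : 'M[F]_3)
  (hO00 : (- 1 + (ent N 2 0) * (ent N 2 0) + (ent N 1 0) * (ent N 1 0) + (ent N 0 0) * (ent N 0 0)) = 0)
  (hO01 : ((ent N 2 0) * (ent N 2 1) + (ent N 1 0) * (ent N 1 1) + (ent N 0 0) * (ent N 0 1)) = 0)
  (hO02 : ((ent N 2 0) * (ent N 2 2) + (ent N 1 0) * (ent N 1 2) + (ent N 0 0) * (ent N 0 2)) = 0)
  (hO11 : (- 1 + (ent N 2 1) * (ent N 2 1) + (ent N 1 1) * (ent N 1 1) + (ent N 0 1) * (ent N 0 1)) = 0)
  (hO12 : ((ent N 2 1) * (ent N 2 2) + (ent N 1 1) * (ent N 1 2) + (ent N 0 1) * (ent N 0 2)) = 0)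
  (hO22 : (- 1 + (ent N 2 2) * (ent N 2 2) + (ent N 1 2) * (ent N 1 2) + (ent N 0 2) * (ent N 0 2)) = 0)
  (hP00 : (- 1 + (ent N 0 2) * (ent N 0 2) + (ent N 0 1) * (ent N 0 1) + (ent N 0 0) * (ent N 0 0)) = 0)
  (hP01 : ((ent N 0 2) * (ent N 1 2) + (ent N 0 1) * (ent N 1 1) + (ent N 0 0) * (ent N 1 0)) = 0)
  (hP02 : ((ent N 0 2) * (ent N 2 2) + (ent N 0 1) * (ent N 2 1) + (ent N 0 0) * (ent N 2 0)) = 0)
  (hP11 : (- 1 + (ent N 1 2) * (ent N 1 2) + (ent N 1 1) * (ent N 1 1) + (ent N 1 0) * (ent N 1 0)) = 0)
  (hP12 : ((ent N 1 2) * (ent N 2 2) + (ent N 1 1) * (ent N 2 1) + (ent N 1 0) * (ent N 2 0)) = 0)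
  (hP22 : (- 1 + (ent N 2 2) * (ent N 2 2) + (ent N 2 1) * (ent N 2 1) + (ent N 2 0) * (ent N 2 0)) = 0)
  (hC00 : (- (ent N 1 2) * (ent N 2 1) + (ent N 1 1) * (ent N 2 2) - (ent N 0 0)) = 0)
  (hC01 : ((ent N 1 2) * (ent N 2 0) - (ent N 1 0) * (ent N 2 2) - (ent N 0 1)) = 0)
  (hC02 : (- (ent N 1 1) * (ent N 2 0) + (ent N 1 0) * (ent N 2 1) - (ent N 0 2)) = 0)
  (hC10 : (- (ent N 1 0) + (ent N 0 2) * (ent N 2 1) - (ent N 0 1) * (ent N 2 2)) = 0)
  (hC11 : (- (ent N 1 1) - (ent N 0 2) * (ent N 2 0) + (ent N 0 0) * (ent N 2 2)) = 0)
  (hC12 : (- (ent N 1 2) + (ent N 0 1) * (ent N 2 0) - (ent N 0 0) * (ent N 2 1)) = 0)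
  (hC20 : (- (ent N 2 0) - (ent N 0 2) * (ent N 1 1) + (ent N 0 1) * (ent N 1 2)) = 0)
  (hC21 : (- (ent N 2 1) + (ent N 0 2) * (ent N 1 0) - (ent N 0 0) * (ent N 1 2)) = 0)
  (hC22 : (- (ent N 2 2) - (ent N 0 1) * (ent N 1 0) + (ent N 0 0) * (ent N 1 1)) = 0)
  : Phimx ((ent N 1 0) - (ent N 0 1)) ((ent N 2 0) + (ent N 0 2)) ((ent N 2 1) + (ent N 1 2)) (1 + (ent N 2 2) - (ent N 1 1) - (ent N 0 0)) = (4%:R * (1 + (ent N 2 2) - (ent N 1 1) - (ent N 0 0))) *: N.
Proof.
apply/mx3_eq => -[|[|[|i]]] // -[|[|[|j]]] // _ _; rewrite !mxE !entE ?inordK //=.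
- apply/eqP; rewrite -subr_eq0; apply/eqP.
  transitivity ((1) * (- 1 + (ent N 2 0) * (ent N 2 0) + (ent N 1 0) * (ent N 1 0) + (ent N 0 0) * (ent N 0 0)) + (- 1) * (- 1 + (ent N 2 1) * (ent N 2 1) + (ent N 1 1) * (ent N 1 1) + (ent N 0 1) * (ent N 0 1)) + (- 1) * (- 1 + (ent N 2 2) * (ent N 2 2) + (ent N 1 2) * (ent N 1 2) + (ent N 0 2) * (ent N 0 2)) + (2%:R) * (- 1 + (ent N 0 2) * (ent N 0 2) + (ent N 0 1) * (ent N 0 1) + (ent N 0 0) * (ent N 0 0)) + (2%:R) * (- (ent N 1 2) * (ent N 2 1) + (ent N 1 1) * (ent N 2 2) - (ent N 0 0)) + (- 2%:R) * (- (ent N 1 1) - (ent N 0 2) * (ent N 2 0) + (ent N 0 0) * (ent N 2 2)) + (2%:R) * (- (ent N 2 2) - (ent N 0 1) * (ent N 1 0) + (ent N 0 0) * (ent N 1 1))); first ring.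
  by rewrite hO00 hO11 hO22 hP00 hC00 hC11 hC22; ring.
- apply/eqP; rewrite -subr_eq0; apply/eqP.
  transitivity ((2%:R) * ((ent N 2 0) * (ent N 2 1) + (ent N 1 0) * (ent N 1 1) + (ent N 0 0) * (ent N 0 1)) + (2%:R) * ((ent N 0 2) * (ent N 1 2) + (ent N 0 1) * (ent N 1 1) + (ent N 0 0) * (ent N 1 0)) + (2%:R) * ((ent N 1 2) * (ent N 2 0) - (ent N 1 0) * (ent N 2 2) - (ent N 0 1)) + (2%:R) * (- (ent N 1 0) + (ent N 0 2) * (ent N 2 1) - (ent N 0 1) * (ent N 2 2))); first ring.
  by rewrite hO01 hP01 hC01 hC10; ring.
- apply/eqP; rewrite -subr_eq0; apply/eqP.
  transitivity ((2%:R) * ((ent N 2 0) * (ent N 2 2) + (ent N 1 0) * (ent N 1 2) + (ent N 0 0) * (ent N 0 2)) + (- 2%:R) * ((ent N 0 2) * (ent N 2 2) + (ent N 0 1) * (ent N 2 1) + (ent N 0 0) * (ent N 2 0)) + (2%:R) * (- (ent N 1 1) * (ent N 2 0) + (ent N 1 0) * (ent N 2 1) - (ent N 0 2)) + (- 2%:R) * (- (ent N 2 0) - (ent N 0 2) * (ent N 1 1) + (ent N 0 1) * (ent N 1 2))); first ring.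
  by rewrite hO02 hP02 hC02 hC20; ring.
- apply/eqP; rewrite -subr_eq0; apply/eqP.
  transitivity ((2%:R) * ((ent N 2 0) * (ent N 2 1) + (ent N 1 0) * (ent N 1 1) + (ent N 0 0) * (ent N 0 1)) + (2%:R) * ((ent N 0 2) * (ent N 1 2) + (ent N 0 1) * (ent N 1 1) + (ent N 0 0) * (ent N 1 0)) + (2%:R) * ((ent N 1 2) * (ent N 2 0) - (ent N 1 0) * (ent N 2 2) - (ent N 0 1)) + (2%:R) * (- (ent N 1 0) + (ent N 0 2) * (ent N 2 1) - (ent N 0 1) * (ent N 2 2))); first ring.
  by rewrite hO01 hP01 hC01 hC10; ring.
- apply/eqP; rewrite -subr_eq0; apply/eqP.
  transitivity ((- 1) * (- 1 + (ent N 2 0) * (ent N 2 0) + (ent N 1 0) * (ent N 1 0) + (ent N 0 0) * (ent N 0 0)) + (1) * (- 1 + (ent N 2 1) * (ent N 2 1) + (ent N 1 1) * (ent N 1 1) + (ent N 0 1) * (ent N 0 1)) + (- 1) * (- 1 + (ent N 2 2) * (ent N 2 2) + (ent N 1 2) * (ent N 1 2) + (ent N 0 2) * (ent N 0 2)) + (2%:R) * (- 1 + (ent N 1 2) * (ent N 1 2) + (ent N 1 1) * (ent N 1 1) + (ent N 1 0) * (ent N 1 0)) + (- 2%:R) * (- (ent N 1 2) * (ent N 2 1) + (ent N 1 1) * (ent N 2 2) - (ent N 0 0)) + (2%:R) * (- (ent N 1 1) - (ent N 0 2) * (ent N 2 0) + (ent N 0 0) * (ent N 2 2)) + (2%:R)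 * (- (ent N 2 2) - (ent N 0 1) * (ent N 1 0) + (ent N 0 0) * (ent N 1 1))); first ring.
  by rewrite hO00 hO11 hO22 hP11 hC00 hC11 hC22; ring.
- apply/eqP; rewrite -subr_eq0; apply/eqP.
  transitivity ((2%:R) * ((ent N 2 1) * (ent N 2 2) + (ent N 1 1) * (ent N 1 2) + (ent N 0 1) * (ent N 0 2)) + (- 2%:R) * ((ent N 1 2) * (ent N 2 2) + (ent N 1 1) * (ent N 2 1) + (ent N 1 0) * (ent N 2 0)) + (2%:R) * (- (ent N 1 2) + (ent N 0 1) * (ent N 2 0) - (ent N 0 0) * (ent N 2 1)) + (- 2%:R) * (- (ent N 2 1) + (ent N 0 2) * (ent N 1 0) - (ent N 0 0) * (ent N 1 2))); first ring.
  by rewrite hO12 hP12 hC12 hC21; ring.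
- apply/eqP; rewrite -subr_eq0; apply/eqP.
  transitivity ((- 2%:R) * ((ent N 2 0) * (ent N 2 2) + (ent N 1 0) * (ent N 1 2) + (ent N 0 0) * (ent N 0 2)) + (2%:R) * ((ent N 0 2) * (ent N 2 2) + (ent N 0 1) * (ent N 2 1) + (ent N 0 0) * (ent N 2 0)) + (- 2%:R) * (- (ent N 1 1) * (ent N 2 0) + (ent N 1 0) * (ent N 2 1) - (ent N 0 2)) + (2%:R) * (- (ent N 2 0) - (ent N 0 2) * (ent N 1 1) + (ent N 0 1) * (ent N 1 2))); first ring.
  by rewrite hO02 hP02 hC02 hC20; ring.
- apply/eqP; rewrite -subr_eq0; apply/eqP.
  transitivity ((- 2%:R) * ((ent N 2 1) * (ent N 2 2) + (ent N 1 1) * (ent N 1 2) + (ent N 0 1) * (ent N 0 2)) + (2%:R) * ((ent N 1 2) * (ent N 2 2) + (ent N 1 1) * (ent N 2 1) + (ent N 1 0) * (ent N 2 0)) + (- 2%:R) * (- (ent N 1 2) + (ent N 0 1) * (ent N 2 0) - (ent N 0 0) * (ent N 2 1)) + (2%:R) * (- (ent N 2 1) + (ent N 0 2) * (ent N 1 0) - (ent N 0 0) * (ent N 1 2))); first ring.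
  by rewrite hO12 hP12 hC12 hC21; ring.
- apply/eqP; rewrite -subr_eq0; apply/eqP.
  transitivity ((- 1) * (- 1 + (ent N 2 0) * (ent N 2 0) + (ent N 1 0) * (ent N 1 0) + (ent N 0 0) * (ent N 0 0)) + (- 1) * (- 1 + (ent N 2 1) * (ent N 2 1) + (ent N 1 1) * (ent N 1 1) + (ent N 0 1) * (ent N 0 1)) + (- 3%:R) * (- 1 + (ent N 2 2) * (ent N 2 2) + (ent N 1 2) * (ent N 1 2) + (ent N 0 2) * (ent N 0 2)) + (2%:R) * (- 1 + (ent N 0 2) * (ent N 0 2) + (ent N 0 1) * (ent N 0 1) + (ent N 0 0) * (ent N 0 0)) + (2%:R) * (- 1 + (ent N 1 2) * (ent N 1 2) + (ent N 1 1) * (ent N 1 1) + (ent N 1 0) * (ent N 1 0)) + (2%:R) * (- (ent N 1 2) * (ent N 2 1) + (ent N 1 1) * (ent N 2 2) - (ent N 0 0)) + (2%:R) * (- (ent N 1 1) - (ent N 0 2) * (ent N 2 0) + (ent N 0 0) * (ent N 2 2)) + (2%:R) * (- (ent N 2 2) - (ent N 0 1) * (ent N 1 0) + (ent N 0 0) * (ent N 1 1))); first ring.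
  by rewrite hO00 hO11 hO22 hP00 hP11 hC00 hC11 hC22; ring.
Qed.

End Cert.


Lemma mulmx_ent (T : comRingType) (A B : 'M[T]_3) i j : (i < 3)%N -> (j < 3)%N ->
  ent (A *m B) i j = ent A i 0 * ent B 0 j + ent A i 1 * ent B 1 j + ent A i 2 * ent B 2 j.
Proof. by move=> hi hj; rewrite /ent mxE sum3. Qed.

Lemma tr_ent (T : Type) (A : 'M[T]_3) i j : ent A^T i j = ent A j i.
Proof. by rewrite /ent mxE. Qed.

Lemma one_ent (T : comRingType) i j : (i < 3)%N -> (j < 3)%N -> ent (1%:M : 'M[T]_3) i j = (i == j)%:R.
Proof. by move=> hi hj; rewrite /ent mxE inord3_eq. Qed.

Lemma eq_trans0 (T : zmodType) (a b c : T) : a = b -> c = a - b -> c = 0.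
Proof. by move=> -> ->; rewrite subrr. Qed.

Lemma Phimx_orth (T : comRingType) (w x y z : T) :
  (Phimx w x y z)^T *m Phimx w x y z = ((w*w+x*x+y*y+z*z)^+2) *: 1%:M.
Proof.
apply/mx3_eq => -[|[|[|i]]] // -[|[|[|j]]] // _ _;
 rewrite -/(ent _ _ _) mulmx_ent // !tr_ent /ent !mxE ?inordK //=.
all: rewrite ?inord3_eq //=; ring.
Qed.

Section Surj.
Variable F : numFieldType.

Lemma O3_surj (M : 'M[F]_3) : M^T *m M = 1%:M -> exists (c w x y z : F), M = c *: Phimx w x y z.
Proof.
move=> hM.
pose d := \det M.
have d2 : d * d = 1.
  by have := congr1 determinant hM; rewrite det_mulmx det_tr det1.
pose N := d *: M.
have hN : N^T *m N = 1%:M.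
  have eT : (d *: M)^T = d *: M^T by apply/matrixP => i j; rewrite !mxE.
  by rewrite /N eT -scalemxAl -scalemxAr hM scalerA d2 scale1r.
have dN : \det N = 1.
  rewrite /N detZ -/d; transitivity ((d * d) * (d * d)); first ring.
  by rewrite d2 mulr1.
have hN' := mulmx1C hN.
have adjN : \adj N = N^T.
  have := mul_mx_adj N; rewrite dN => h.
  by rewrite -[\adj N]mul1mx -hN -mulmxA h mulmx1.
have MN : M = d *: N by rewrite /N scalerA d2 scale1r.
clearbody N.
have hO00 : (- 1 + (ent N 2 0) * (ent N 2 0) + (ent N 1 0) * (ent N 1 0) + (ent N 0 0) * (ent N 0 0)) = 0.
  have := congr1 (fun A => ent A 0 0) hN; rewrite mulmx_ent // !tr_ent one_ent //= => h; apply: (eq_trans0 h); ring.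
have hO01 : ((ent N 2 0) * (ent N 2 1) + (ent N 1 0) * (ent N 1 1) + (ent N 0 0) * (ent N 0 1)) = 0.
  have := congr1 (fun A => ent A 0 1) hN; rewrite mulmx_ent // !tr_ent one_ent //= => h; apply: (eq_trans0 h); ring.
have hO02 : ((ent N 2 0) * (ent N 2 2) + (ent N 1 0) * (ent N 1 2) + (ent N 0 0) * (ent N 0 2)) = 0.
  have := congr1 (fun A => ent A 0 2) hN; rewrite mulmx_ent // !tr_ent one_ent //= => h; apply: (eq_trans0 h); ring.
have hO11 : (- 1 + (ent N 2 1) * (ent N 2 1) + (ent N 1 1) * (ent N 1 1) + (ent N 0 1) * (ent N 0 1)) = 0.
  have := congr1 (fun A => ent A 1 1) hN; rewrite mulmx_ent // !tr_ent one_ent //= => h; apply: (eq_trans0 h); ring.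
have hO12 : ((ent N 2 1) * (ent N 2 2) + (ent N 1 1) * (ent N 1 2) + (ent N 0 1) * (ent N 0 2)) = 0.
  have := congr1 (fun A => ent A 1 2) hN; rewrite mulmx_ent // !tr_ent one_ent //= => h; apply: (eq_trans0 h); ring.
have hO22 : (- 1 + (ent N 2 2) * (ent N 2 2) + (ent N 1 2) * (ent N 1 2) + (ent N 0 2) * (ent N 0 2)) = 0.
  have := congr1 (fun A => ent A 2 2) hN; rewrite mulmx_ent // !tr_ent one_ent //= => h; apply: (eq_trans0 h); ring.
have hP00 : (- 1 + (ent N 0 2) * (ent N 0 2) + (ent N 0 1) * (ent N 0 1) + (ent N 0 0) * (ent N 0 0)) = 0.
  have := congr1 (fun A => ent A 0 0) hN'; rewrite mulmx_ent // !tr_ent one_ent //= => h; apply: (eq_trans0 h); ring.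
have hP01 : ((ent N 0 2) * (ent N 1 2) + (ent N 0 1) * (ent N 1 1) + (ent N 0 0) * (ent N 1 0)) = 0.
  have := congr1 (fun A => ent A 0 1) hN'; rewrite mulmx_ent // !tr_ent one_ent //= => h; apply: (eq_trans0 h); ring.
have hP02 : ((ent N 0 2) * (ent N 2 2) + (ent N 0 1) * (ent N 2 1) + (ent N 0 0) * (ent N 2 0)) = 0.
  have := congr1 (fun A => ent A 0 2) hN'; rewrite mulmx_ent // !tr_ent one_ent //= => h; apply: (eq_trans0 h); ring.
have hP11 : (- 1 + (ent N 1 2) * (ent N 1 2) + (ent N 1 1) * (ent N 1 1) + (ent N 1 0) * (ent N 1 0)) = 0.
  have := congr1 (fun A => ent A 1 1) hN'; rewrite mulmx_ent // !tr_ent one_ent //= => h; apply: (eq_trans0 h); ring.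
have hP12 : ((ent N 1 2) * (ent N 2 2) + (ent N 1 1) * (ent N 2 1) + (ent N 1 0) * (ent N 2 0)) = 0.
  have := congr1 (fun A => ent A 1 2) hN'; rewrite mulmx_ent // !tr_ent one_ent //= => h; apply: (eq_trans0 h); ring.
have hP22 : (- 1 + (ent N 2 2) * (ent N 2 2) + (ent N 2 1) * (ent N 2 1) + (ent N 2 0) * (ent N 2 0)) = 0.
  have := congr1 (fun A => ent A 2 2) hN'; rewrite mulmx_ent // !tr_ent one_ent //= => h; apply: (eq_trans0 h); ring.
have hC00 : (- (ent N 1 2) * (ent N 2 1) + (ent N 1 1) * (ent N 2 2) - (ent N 0 0)) = 0.
  have := congr1 (fun A => ent A 0 0) adjN; rewrite /ent !mxE /cofactor det2 /ent !mxE !entE /= !inordK //= /bump /= !(add0n, addn0, add1n) => h; apply: (eq_trans0 h); ring.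
have hC01 : ((ent N 1 2) * (ent N 2 0) - (ent N 1 0) * (ent N 2 2) - (ent N 0 1)) = 0.
  have := congr1 (fun A => ent A 1 0) adjN; rewrite /ent !mxE /cofactor det2 /ent !mxE !entE /= !inordK //= /bump /= !(add0n, addn0, add1n) => h; apply: (eq_trans0 h); ring.
have hC02 : (- (ent N 1 1) * (ent N 2 0) + (ent N 1 0) * (ent N 2 1) - (ent N 0 2)) = 0.
  have := congr1 (fun A => ent A 2 0) adjN; rewrite /ent !mxE /cofactor det2 /ent !mxE !entE /= !inordK //= /bump /= !(add0n, addn0, add1n) => h; apply: (eq_trans0 h); ring.
have hC10 : (- (ent N 1 0) + (ent N 0 2) * (ent N 2 1) - (ent N 0 1) * (ent N 2 2)) = 0.
  have := congr1 (fun A => ent A 0 1) adjN; rewrite /ent !mxE /cofactor det2 /ent !mxE !entE /= !inordK //= /bump /= !(add0n, addn0, add1n) => h; apply: (eq_trans0 h); ring.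
have hC11 : (- (ent N 1 1) - (ent N 0 2) * (ent N 2 0) + (ent N 0 0) * (ent N 2 2)) = 0.
  have := congr1 (fun A => ent A 1 1) adjN; rewrite /ent !mxE /cofactor det2 /ent !mxE !entE /= !inordK //= /bump /= !(add0n, addn0, add1n) => h; apply: (eq_trans0 h); ring.
have hC12 : (- (ent N 1 2) + (ent N 0 1) * (ent N 2 0) - (ent N 0 0) * (ent N 2 1)) = 0.
  have := congr1 (fun A => ent A 2 1) adjN; rewrite /ent !mxE /cofactor det2 /ent !mxE !entE /= !inordK //= /bump /= !(add0n, addn0, add1n) => h; apply: (eq_trans0 h); ring.
have hC20 : (- (ent N 2 0) - (ent N 0 2) * (ent N 1 1) + (ent N 0 1) * (ent N 1 2)) = 0.
  have := congr1 (fun A => ent A 0 2) adjN; rewrite /ent !mxE /cofactor det2 /ent !mxE !entE /= !inordK //= /bump /= !(add0n, addn0, add1n) => h; apply: (eq_trans0 h); ring.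
have hC21 : (- (ent N 2 1) + (ent N 0 2) * (ent N 1 0) - (ent N 0 0) * (ent N 1 2)) = 0.
  have := congr1 (fun A => ent A 1 2) adjN; rewrite /ent !mxE /cofactor det2 /ent !mxE !entE /= !inordK //= /bump /= !(add0n, addn0, add1n) => h; apply: (eq_trans0 h); ring.
have hC22 : (- (ent N 2 2) - (ent N 0 1) * (ent N 1 0) + (ent N 0 0) * (ent N 1 1)) = 0.
  have := congr1 (fun A => ent A 2 2) adjN; rewrite /ent !mxE /cofactor det2 /ent !mxE !entE /= !inordK //= /bump /= !(add0n, addn0, add1n) => h; apply: (eq_trans0 h); ring.
have hsum : (1 + (ent N 2 2) + (ent N 1 1) + (ent N 0 0)) + (1 - (ent N 2 2) - (ent N 1 1) + (ent N 0 0)) + (1 - (ent N 2 2) + (ent N 1 1) - (ent N 0 0)) + (1 + (ent N 2 2) - (ent N 1 1) - (ent N 0 0)) = 4%:R by ring.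
have [hK0|hK0] := eqVneq (1 + (ent N 2 2) + (ent N 1 1) + (ent N 0 0)) 0; last first.
  rewrite MN. exists (d / (4%:R * (1 + (ent N 2 2) + (ent N 1 1) + (ent N 0 0)))), (1 + (ent N 2 2) + (ent N 1 1) + (ent N 0 0)), ((ent N 2 1) - (ent N 1 2)), (- (ent N 2 0) + (ent N 0 2)), ((ent N 1 0) - (ent N 0 1)); rewrite (so3_cert0 hO00 hO01 hO02 hO11 hO12 hO22 hP00 hP01 hP02 hP11 hP12 hP22 hC00 hC01 hC02 hC10 hC11 hC12 hC20 hC21 hC22) scalerA divfK //.
  by rewrite mulf_neq0 // pnatr_eq0.
have [hK1|hK1] := eqVneq (1 - (ent N 2 2) - (ent N 1 1) + (ent N 0 0)) 0; last first.
  rewrite MN. exists (d / (4%:R * (1 - (ent N 2 2) - (ent N 1 1) + (ent N 0 0)))), ((ent N 2 1) - (ent N 1 2)), (1 - (ent N 2 2) - (ent N 1 1) + (ent N 0 0)), ((ent N 1 0) + (ent N 0 1)), ((ent N 2 0) + (ent N 0 2)); rewrite (so3_cert1 hO00 hO01 hO02 hO11 hO12 hO22 hP00 hP01 hP02 hP11 hP12 hP22 hC00 hC01 hC02 hC10 hC11 hC12 hC20 hC21 hC22) scalerA divfK //.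
  by rewrite mulf_neq0 // pnatr_eq0.
have [hK2|hK2] := eqVneq (1 - (ent N 2 2) + (ent N 1 1) - (ent N 0 0)) 0; last first.
  rewrite MN. exists (d / (4%:R * (1 - (ent N 2 2) + (ent N 1 1) - (ent N 0 0)))), (- (ent N 2 0) + (ent N 0 2)), ((ent N 1 0) + (ent N 0 1)), (1 - (ent N 2 2) + (ent N 1 1) - (ent N 0 0)), ((ent N 2 1) + (ent N 1 2)); rewrite (so3_cert2 hO00 hO01 hO02 hO11 hO12 hO22 hP00 hP01 hP02 hP11 hP12 hP22 hC00 hC01 hC02 hC10 hC11 hC12 hC20 hC21 hC22) scalerA divfK //.
  by rewrite mulf_neq0 // pnatr_eq0.
have hK3 : (1 + (ent N 2 2) - (ent N 1 1) - (ent N 0 0)) != 0.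
  by apply/eqP => h3; move: hsum; rewrite hK0 hK1 hK2 h3 !addr0 => /eqP; rewrite eq_sym pnatr_eq0.
rewrite MN. exists (d / (4%:R * (1 + (ent N 2 2) - (ent N 1 1) - (ent N 0 0)))), ((ent N 1 0) - (ent N 0 1)), ((ent N 2 0) + (ent N 0 2)), ((ent N 2 1) + (ent N 1 2)), (1 + (ent N 2 2) - (ent N 1 1) - (ent N 0 0)); rewrite (so3_cert3 hO00 hO01 hO02 hO11 hO12 hO22 hP00 hP01 hP02 hP11 hP12 hP22 hC00 hC01 hC02 hC10 hC11 hC12 hC20 hC21 hC22) scalerA divfK //.
  by rewrite mulf_neq0 // pnatr_eq0.
Qed.
End Surj.


Lemma rmorph_phiE (T T' : comRingType) (f : {rmorphism T -> T'}) w x y z i j :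
  f (phiE w x y z i j) = phiE (f w) (f x) (f y) (f z) i j.
Proof.
by case: i => [|[|[|i]]]; case: j => [|[|[|j]]];
  rewrite /= ?(rmorphB, rmorphD, rmorphMn, rmorphM).
Qed.

Section Poly.
Variable F : numFieldType.
Local Notation P4 := {mpoly F[4]}.
Local Notation P9 := {mpoly F[3 * 3]}.

Definition X4 (k : nat) : P4 := 'X_(inord k).
Definition PhiP : 'M[P4]_3 := Phimx (X4 0) (X4 1) (X4 2) (X4 3).
Definition lq : (3 * 3).-tuple P4 := [tuple mxvec PhiP 0 k | k < 3 * 3].
Definition T (p : P9) : P4 := p \mPo lq.
Definition PhiC (v : 'I_4 -> F) : 'M[F]_3 :=
  Phimx (v (inord 0)) (v (inord 1)) (v (inord 2)) (v (inord 3)).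
Definition evalN (p : P9) (N : 'M[F]_3) : F := p.@[fun k => mxvec N 0 k].

Lemma tnth_lq k : tnth lq k = mxvec PhiP 0 k.
Proof. by rewrite tnth_mktuple. Qed.

Lemma T_eval p v : (T p).@[v] = evalN p (PhiC v).
Proof.
rewrite /T comp_mpoly_meval /evalN; apply: meval_eq => k.
rewrite tnth_lq; case/mxvec_indexP: k => i j; rewrite !mxvecE !mxE.
by rewrite (rmorph_phiE (meval v)) /X4 /= !mevalXU.
Qed.

Lemma T_X i j : T 'X_(mxvec_index i j) = PhiP i j.
Proof. by rewrite /T comp_mpolyXU -tnth_nth tnth_lq mxvecE. Qed.

Lemma X4_homog k : X4 k \is 1.-homog.
Proof. by rewrite /X4 dhomogX; apply/eqP; exact: mdeg1. Qed.

Lemma PhiP_homog i j : PhiP i j \is 2.-homog.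
Proof.
have hM a b : (X4 a * X4 b) \is 2.-homog by apply: (dhomogM (X4_homog a) (X4_homog b)).
rewrite mxE; case: (nat_of_ord i) => [|[|[|?]]]; case: (nat_of_ord j) => [|[|[|?]]];
  by rewrite /= ?(rpredB, rpredD, rpredMn, hM).
Qed.

Lemma prod_homog (I : Type) (r : seq I) (e : I -> nat) (Q : I -> P4) :
  (forall i, Q i \is (e i).-homog) -> \prod_(i <- r) Q i \is (\sum_(i <- r) e i)%N.-homog.
Proof.
move=> h; elim: r => [|a r IH]; first by rewrite !big_nil dhomog1.
by rewrite !big_cons; apply: dhomogM (h a) IH.
Qed.

Lemma T_homog d p : p \is d.-homog -> T p \is (2 * d).-homog.
Proof.
move=> hp; rewrite /T comp_mpolyE big_seq; apply: rpred_sum => m hm; apply: rpredZ.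
have -> : (2 * d = \sum_(i < 3 * 3) 2 * m i)%N.
  by rewrite -big_distrr /= -mdegE (dhomog_mf hp hm).
apply: prod_homog => i; apply: dhomogMn.
rewrite tnth_lq; case/mxvec_indexP: i => i j; rewrite mxvecE; exact: PhiP_homog.
Qed.

Lemma evalN_scale d p c N : p \is d.-homog -> evalN p (c *: N) = c ^+ d * evalN p N.
Proof.
move=> hp; rewrite /evalN !mevalE big_distrr /=; apply: eq_big_seq => m hm.
rewrite mulrCA; congr (_ * _).
have hd : d = (\sum_i m i)%N by rewrite -mdegE (dhomog_mf hp hm).
rewrite hd -prodrXr -big_split /=; apply: eq_bigr => i _.
by rewrite linearZ mxE exprMn.
Qed.

End Poly.


Section Vanish.
Variable F : numFieldType.

Lemma poly_inf_roots (U : {poly F}) : (forall x, U.[x] = 0) -> U = 0.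
Proof.
move=> h; apply: (@roots_geq_poly_eq0 _ U [seq i%:R | i <- iota 0 (size U)]).
- by apply/allP => x /mapP [i _ ->]; rewrite /root h.
- by rewrite map_inj_uniq ?iota_uniq // => a b /eqP; rewrite eqr_nat => /eqP.
- by rewrite size_map size_iota.
Qed.

Definition mr n (m : 'X_{1..n.+1}) : 'X_{1..n} := [multinom m (widen_ord (leqnSn n) i) | i < n].

Lemma mr_inj n (m1 m2 : 'X_{1..n.+1}) :
  m1 ord_max = m2 ord_max -> mr m1 = mr m2 -> m1 = m2.
Proof.
move=> h1 /mnmP h2; apply/mnmP => i; case: (ltnP i n) => hi.
  have -> : i = widen_ord (leqnSn n) (Ordinal hi) by apply/val_inj.
  by have := h2 (Ordinal hi); rewrite !mnmE.
have -> : i = ord_max by apply/val_inj/anti_leq; rewrite hi -ltnS ltn_ord.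
exact: h1.
Qed.

Definition ext n (v : 'I_n -> F) (x : F) (i : 'I_n.+1) : F := oapp v x (insub (val i)).

Lemma ext_widen n v x (j : 'I_n) : ext v x (widen_ord (leqnSn n) j) = v j.
Proof. by rewrite /ext /= valK. Qed.

Lemma ext_max n v x : ext v x (@ord_max n) = x.
Proof. by rewrite /ext /= insubN // ltnn. Qed.

Lemma sum_partition (T : eqType) (V : nmodType) (s : seq T) (f : T -> nat) N (G : T -> V) :
  (forall m, m \in s -> (f m < N)%N) ->
  \sum_(m <- s) G m = \sum_(k < N) \sum_(m <- s | f m == k) G m.
Proof.
move=> h; symmetry.
rewrite (eq_bigr (fun k : 'I_N => \sum_(m <- s) (if f m == k then G m else 0)));
  last by move=> k _; rewrite big_mkcond.
rewrite exchange_big /= big_seq [in RHS]big_seq; apply: eq_bigr => m hm.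
by rewrite -big_mkcond /= (big_pred1 (Ordinal (h m hm))).
Qed.

Lemma mpoly_vanish n (P : {mpoly F[n]}) : (forall v, P.@[v] = 0) -> P = 0.
Proof.
elim: n P => [|n IH] P hP.
  have m0 (m : 'X_{1..0}) : m = 0%MM by apply/mnmP => -[].
  case hs: (msupp P) => [|m s]; first by rewrite (mpolyE P) hs big_nil.
  have hm : m \in msupp P by rewrite hs mem_head.
  have := hP (fun _ => 0); rewrite mevalE (bigD1_seq m) ?msupp_uniq //= big_ord0 mulr1.
  rewrite big1 ?addr0 => [hPm|m']; last by rewrite (m0 m') (m0 m) eqxx.
  by move: hm; rewrite mcoeff_msupp hPm eqxx.
pose N := (\max_(m <- msupp P) m ord_max).+1.
have hN m : m \in msupp P -> (m ord_max < N)%N.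
  by move=> hm; rewrite ltnS (leq_bigmax_seq m).
pose Q (k : nat) : {mpoly F[n]} :=
  \sum_(m <- msupp P | m ord_max == k) P@_m *: 'X_[mr m].
have hPQ v : P.@[v] = \sum_(k < N) (Q k).@[fun i => v (widen_ord (leqnSn n) i)] * v ord_max ^+ k.
  rewrite mevalE (@sum_partition _ _ _ (fun m : 'X_{1..n.+1} => m ord_max) N _ hN).
  apply: eq_bigr => k _; rewrite /Q raddf_sum /= big_distrl /=.
  apply: eq_bigr => m /eqP hmk; rewrite mevalZ mevalX big_ord_recr /= hmk mulrA.
  by congr (_ * _ * _); apply: eq_bigr => i _; rewrite mnmE.
have hQ k : (k < N)%N -> Q k = 0.
  move=> hk; apply: IH => v'.
  pose U := \poly_(j < N) (Q j).@[v'].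
  have hU : U = 0.
    apply: poly_inf_roots => x; rewrite horner_poly.
    transitivity (P.@[ext v' x]); last exact: hP.
    rewrite hPQ; apply: eq_bigr => j _; rewrite ext_max; congr (_ * _).
    by apply: meval_eq => i; rewrite ext_widen.
  by have := congr1 (fun p : {poly F} => p`_k) hU; rewrite coef_poly hk coef0.
apply/mpolyP => m0; rewrite mcoeff0; apply/eqP; apply/negPn/negP => hm0.
rewrite -mcoeff_msupp in hm0.
have := congr1 (mcoeff (mr m0)) (hQ _ (hN _ hm0)); rewrite /Q raddf_sum /= mcoeff0.
rewrite big_mkcond (bigD1_seq m0) ?msupp_uniq //= eqxx mcoeffZ mcoeffX eqxx mulr1 big1 ?addr0.
  by move=> h; move: hm0; rewrite mcoeff_msupp h eqxx.
move=> m hne; case: eqP => [hl|]; last by [].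
rewrite mcoeffZ mcoeffX.
case: eqP => [hmr|]; last by rewrite mulr0.
by move: hne; rewrite (mr_inj hl hmr) eqxx.
Qed.
End Vanish.


Section Key.
Variable F : numFieldType.
Local Notation P4 := {mpoly F[4]}.
Local Notation P9 := {mpoly F[3 * 3]}.

Definition sP : P4 := X4 F 0 * X4 F 0 + X4 F 1 * X4 F 1 + X4 F 2 * X4 F 2 + X4 F 3 * X4 F 3.

Lemma sP_eval v : sP.@[v] =
  v (inord 0) * v (inord 0) + v (inord 1) * v (inord 1) + v (inord 2) * v (inord 2) + v (inord 3) * v (inord 3).
Proof. by rewrite /sP /X4 !(mevalD, mevalM, mevalXU). Qed.

Lemma sP_neq0 : sP != 0.
Proof.
apply/negP => /eqP h; have := congr1 (meval (fun _ => 1)) h.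
have e4 : (1 + 1 + 1 + 1 : F) = 4%:R by ring.
by rewrite sP_eval meval0 !mulr1 e4 => /eqP; rewrite pnatr_eq0.
Qed.

Lemma key_lower (p : P9) :
  (forall c (M : 'M[F]_3), M^T *m M = 1%:M -> evalN p (c *: M) = 0) -> T p = 0.
Proof.
move=> h.
suff : sP * T p = 0 by move/eqP; rewrite mulf_eq0 (negbTE sP_neq0) /= => /eqP.
apply: mpoly_vanish => v; rewrite mevalM T_eval.
have [s0|s0] := eqVneq (sP.@[v]) 0; first by rewrite s0 mul0r.
rewrite (_ : PhiC v = sP.@[v] *: ((sP.@[v])^-1 *: PhiC v)); last first.
  by rewrite scalerA mulfV // scale1r.
rewrite h ?mulr0 //.
have eT : ((sP.@[v])^-1 *: PhiC v)^T = (sP.@[v])^-1 *: (PhiC v)^T.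
  by apply/matrixP => i j; rewrite !mxE.
rewrite eT -scalemxAl -scalemxAr /PhiC Phimx_orth -sP_eval scalerA.
rewrite scalerA [X in X *: _](_ : _ = 1) ?scale1r //; by field.
Qed.

Lemma key_upper d (p : P9) : p \is d.-homog -> T p = 0 ->
  forall c (M : 'M[F]_3), M^T *m M = 1%:M -> evalN p (c *: M) = 0.
Proof.
move=> hp hT c M hM.
have [c' [w [x [y [z ->]]]]] := O3_surj hM.
pose v (i : 'I_4) := nth 0 [:: w; x; y; z] i.
have -> : Phimx w x y z = PhiC v by rewrite /PhiC /v !inordK.
by rewrite scalerA (evalN_scale _ _ hp) -T_eval hT meval0 mulr0.
Qed.

End Key.


Section Img.
Variable F : numFieldType.
Local Notation P4 := {mpoly F[4]}.
Local Notation P9 := {mpoly F[3 * 3]}.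
Local Notation X := (X4 F).

Definition inImg d (P : P4) := exists p : P9, p \is d.-homog /\ T p = P.

Lemma inImg0 d : inImg d 0.
Proof. by exists 0; rewrite dhomog0 /T raddf0. Qed.

Lemma inImgD d A B : inImg d A -> inImg d B -> inImg d (A + B).
Proof.
move=> [a [ha <-]] [b [hb <-]]; exists (a + b); split; first exact: rpredD.
by rewrite /T raddfD.
Qed.

Lemma inImgZ d c A : inImg d A -> inImg d (c *: A).
Proof.
move=> [a [ha <-]]; exists (c *: a); split; first exact: rpredZ.
by rewrite /T linearZ.
Qed.

Lemma inImgB d A B : inImg d A -> inImg d B -> inImg d (A - B).
Proof. by move=> hA hB; rewrite -scaleN1r; apply: inImgD hA (inImgZ _ hB). Qed.

Lemma inImg_natmul k d A : (0 < k)%N -> inImg d (A *+ k) -> inImg d A.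
Proof.
move=> hk /(inImgZ (k%:R^-1)); rewrite -scaler_nat scalerA mulVf ?scale1r //.
by rewrite pnatr_eq0 -lt0n.
Qed.

Lemma inImg_sum d (I : Type) (r : seq I) (G : I -> P4) :
  (forall i, inImg d (G i)) -> inImg d (\sum_(i <- r) G i).
Proof.
move=> h; elim: r => [|a r IH]; first by rewrite big_nil; exact: inImg0.
by rewrite big_cons; apply: inImgD.
Qed.

Lemma inImgM a b A B : inImg a A -> inImg b B -> inImg (a + b) (A * B).
Proof.
move=> [p [hp <-]] [q [hq <-]]; exists (p * q); split; first exact: dhomogM.
by rewrite /T rmorphM.
Qed.

Lemma inImg_Phi i j : (i < 3)%N -> (j < 3)%N -> inImg 1 (phiE (X 0) (X 1) (X 2) (X 3) i j).
Proof.
move=> hi hj; exists 'X_(mxvec_index (inord i) (inord j)); split.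
  by rewrite dhomogX; apply/eqP; exact: mdeg1.
by rewrite T_X /PhiP mxE !inordK.
Qed.

Local Notation Phi := (phiE (X 0) (X 1) (X 2) (X 3)).

Lemma hlpB (Q : P4) k i j i' j' : (0 < k)%N -> (i < 3)%N -> (j < 3)%N -> (i' < 3)%N -> (j' < 3)%N ->
  Q *+ k = Phi i j - Phi i' j' -> inImg 1 Q.
Proof.
move=> hk hi hj hi' hj' e; apply: (@inImg_natmul k) => //; rewrite e.
by apply: inImgB; apply: inImg_Phi.
Qed.

Lemma hlpD (Q : P4) k i j i' j' : (0 < k)%N -> (i < 3)%N -> (j < 3)%N -> (i' < 3)%N -> (j' < 3)%N ->
  Q *+ k = Phi i j + Phi i' j' -> inImg 1 Q.
Proof.
move=> hk hi hj hi' hj' e; apply: (@inImg_natmul k) => //; rewrite e.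
by apply: inImgD; apply: inImg_Phi.
Qed.

Lemma inImg_XX a b : (a < 4)%N -> (b < 4)%N -> a != b -> inImg 1 (X a * X b).
Proof.
have h01 : inImg 1 (X 0 * X 1) by apply: (@hlpB _ 4 2 1 1 2) => //=; ring.
have h02 : inImg 1 (X 0 * X 2) by apply: (@hlpB _ 4 0 2 2 0) => //=; ring.
have h03 : inImg 1 (X 0 * X 3) by apply: (@hlpB _ 4 1 0 0 1) => //=; ring.
have h12 : inImg 1 (X 1 * X 2) by apply: (@hlpD _ 4 0 1 1 0) => //=; ring.
have h13 : inImg 1 (X 1 * X 3) by apply: (@hlpD _ 4 0 2 2 0) => //=; ring.
have h23 : inImg 1 (X 2 * X 3) by apply: (@hlpD _ 4 1 2 2 1) => //=; ring.
case: a => [|[|[|[|a]]]] //; case: b => [|[|[|[|b]]]] // _ _ _;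
  first [done | by rewrite mulrC].
Qed.

Lemma inImg_D a : (a < 4)%N -> inImg 1 (X 0 * X 0 - X a * X a).
Proof.
case: a => [|[|[|[|a]]]] // _; first by rewrite subrr; apply: inImg0.
- by apply: (@hlpD _ 2 1 1 2 2) => //=; ring.
- by apply: (@hlpD _ 2 0 0 2 2) => //=; ring.
- by apply: (@hlpD _ 2 0 0 1 1) => //=; ring.
Qed.

Lemma inImg_sq a b : (a < 4)%N -> (b < 4)%N -> inImg 1 (X a * X a - X b * X b).
Proof.
move=> ha hb; rewrite (_ : _ - _ = (X 0 * X 0 - X b * X b) - (X 0 * X 0 - X a * X a)); last by ring.
by apply: inImgB; apply: inImg_D.
Qed.

End Img.


Section Mono.
Variable F : numFieldType.
Local Notation P4 := {mpoly F[4]}.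
Local Notation P9 := {mpoly F[3 * 3]}.
Local Notation X := (X4 F).

Lemma X4_ord (i : 'I_4) : X i = 'X_i.
Proof. by rewrite /X4 inord_val. Qed.

Lemma inImg_sumc d (I : Type) (r : seq I) (Pr : pred I) (G : I -> P4) :
  (forall i, Pr i -> inImg d (G i)) -> inImg d (\sum_(i <- r | Pr i) G i).
Proof.
move=> h; apply: big_ind => //; [exact: inImg0 | exact: inImgD].
Qed.

Lemma avoid2 a b : exists v, [&& (v < 4)%N, v != a & v != b].
Proof.
have [h0|h0] := boolP ((0 != a) && (0 != b)); first by exists 0%N.
have [h1|h1] := boolP ((1 != a) && (1 != b)); first by exists 1%N.
exists 2%N; move: h0 h1; rewrite !negb_and !negbK.
by case: a => [|[|[|a]]]; case: b => [|[|[|b]]].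
Qed.

Lemma cubic a b : (a < 4)%N -> (b < 4)%N -> a != b -> inImg 2 (X a * X a * X a * X b).
Proof.
move=> ha hb hab; have [v /and3P[hv hva hvb]] := avoid2 a b.
rewrite (_ : X a * X a * X a * X b = (X a * X b) * (X a * X a - X v * X v) + (X a * X v) * (X b * X v)); last by ring.
apply: inImgD; apply: (@inImgM F 1 1).
- exact: inImg_XX.
- exact: inImg_sq.
- by apply: inImg_XX; rewrite // eq_sym.
- by apply: inImg_XX; rewrite // eq_sym.
Qed.

Lemma quartic a : (a < 4)%N -> inImg 2 (X a * X a * X a * X a).
Proof.
move=> ha.
have [hav haw hvw] : [/\ a != ((a + 1) %% 4)%N, a != ((a + 2) %% 4)%N &
   ((a + 1) %% 4)%N != ((a + 2) %% 4)%N] by move: ha; case: a => [|[|[|[|a]]]].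
have hv : (((a + 1) %% 4) < 4)%N by rewrite ltn_mod.
have hw : (((a + 2) %% 4) < 4)%N by rewrite ltn_mod.
move: hav haw hvw hv hw; set v := ((a + 1) %% 4)%N; set w := ((a + 2) %% 4)%N => hav haw hvw hv hw.
apply: (@inImg_natmul F 2) => //.
rewrite (_ : X a * X a * X a * X a *+ 2 = (X a * X a - X v * X v) * (X a * X a - X v * X v)
               + (X a * X a - X w * X w) * (X a * X a - X w * X w)
               - (X v * X v - X w * X w) * (X v * X v - X w * X w)
               + ((X a * X v) * (X a * X v)) *+ 2 + ((X a * X w) * (X a * X w)) *+ 2
               - ((X v * X w) * (X v * X w)) *+ 2); last by ring.
have hm (A B : P4) : inImg 1 A -> inImg 1 B -> inImg 2 (A * B) by apply: (@inImgM F 1 1).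
have hm2 (A : P4) : inImg 1 A -> inImg 2 ((A * A) *+ 2).
  by move=> hA; rewrite mulr2n; apply: inImgD; apply: hm.
repeat first [apply: inImgB | apply: inImgD].
all: first [apply: hm2 | apply: hm]; first [exact: inImg_sq | exact: inImg_XX].
Qed.

Lemma base_ne a b c e : (a < 4)%N -> (b < 4)%N -> (c < 4)%N -> (e < 4)%N -> a != b ->
  inImg 2 (X a * X b * X c * X e).
Proof.
move=> ha hb hc he hab.
have [hce|hce] := eqVneq c e; last first.
  by rewrite -mulrA; apply: (@inImgM F 1 1); apply: inImg_XX.
subst e.
have [hca|hca] := eqVneq c a.
  subst c; rewrite (_ : X a * X b * X a * X a = X a * X a * X a * X b); last by ring.
  exact: cubic.
have [hcb|hcb] := eqVneq c b.
  subst c; rewrite (_ : X a * X b * X b * X b = X b * X b * X b * X a); last by ring.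
  by apply: cubic; rewrite // eq_sym.
rewrite (_ : X a * X b * X c * X c = (X a * X c) * (X b * X c)); last by ring.
by apply: (@inImgM F 1 1); apply: inImg_XX; rewrite // eq_sym.
Qed.

Lemma base4 a b c e : (a < 4)%N -> (b < 4)%N -> (c < 4)%N -> (e < 4)%N ->
  inImg 2 (X a * X b * X c * X e).
Proof.
move=> ha hb hc he.
have [hab|hab] := eqVneq a b; last exact: base_ne.
have [hce|hce] := eqVneq c e; last first.
  rewrite (_ : X a * X b * X c * X e = X c * X e * X a * X b); last by ring.
  exact: base_ne.
subst b e; have [hac|hac] := eqVneq a c.
  by subst c; apply: quartic.
rewrite (_ : X a * X a * X c * X c = (X a * X c) * (X a * X c)); last by ring.
by apply: (@inImgM F 1 1); apply: inImg_XX.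
Qed.

Lemma mono_split (m : 'X_{1..4}) : (0 < mdeg m)%N ->
  exists (i : 'I_4) (m' : 'X_{1..4}), m = (U_(i) + m')%MM /\ mdeg m' = (mdeg m).-1.
Proof.
move=> hm; have [i hi] : exists i, m i != 0%N.
  case: (pickP (fun i => m i != 0%N)) => [i hi|h]; first by exists i.
  have m0 : m = 0%MM by apply/mnmP => i; rewrite mnm0E; have := h i => /negbFE/eqP.
  by move: hm; rewrite m0 mdeg0.
have hle : (U_(i) <= m)%MM by rewrite lep1mP.
exists i, (m - U_(i))%MM; split; first by rewrite addmC submK.
by rewrite -{2}(submK hle) mdegD mdeg1 addn1.
Qed.

Lemma XU (i : 'I_4) : 'X_[U_(i)] = X i :> P4.
Proof. by rewrite X4_ord. Qed.

Lemma other (i : 'I_4) : exists v : 'I_4, v != i.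
Proof.
exists (if val i == 0%N then inord 1 else inord 0).
by case: i => [[|k] hk]; rewrite -val_eqE /= inordK.
Qed.

Lemma step k : (2 <= k)%N -> (forall m : 'X_{1..4}, mdeg m = (2 * k)%N -> inImg k ('X_[m] : P4)) ->
  forall m : 'X_{1..4}, mdeg m = (2 * k.+1)%N -> inImg k.+1 ('X_[m] : P4).
Proof.
move=> hk IH m hm.
have hposm : (0 < mdeg m)%N by rewrite hm mulnS.
have [i [m1 [em hm1]]] := mono_split hposm.
have hm1' : mdeg m1 = (2 * k).+1 by rewrite hm1 hm mulnS.
have hposm1 : (0 < mdeg m1)%N by rewrite hm1'.
have [j [m2 [em1 hm2]]] := mono_split hposm1.
rewrite hm1' /= in hm2.
rewrite em em1 !mpolyXD !XU mulrA.
have [hij|hij] := eqVneq i j; last first.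
  rewrite -add1n; apply: inImgM; first by apply: inImg_XX => //; rewrite val_eqE.
  exact: IH.
subst j.
have hposm2 : (0 < mdeg m2)%N by rewrite hm2 muln_gt0 /= (leq_trans _ hk).
have [l [m3 [em2 hm3]]] := mono_split hposm2.
have hm3' v : mdeg (U_(v) + m3)%MM = (2 * k)%N.
  rewrite mdegD mdeg1 hm3 hm2 add1n prednK // muln_gt0 /= (leq_trans _ hk) //.
rewrite em2 mpolyXD XU.
have [hil|hil] := eqVneq i l; last first.
  rewrite (_ : X i * X i * (X l * 'X_[m3]) = (X i * X l) * (X i * 'X_[m3])); last by ring.
  rewrite -add1n; apply: inImgM; first by apply: inImg_XX => //; rewrite val_eqE.
  by rewrite -XU -mpolyXD; apply: IH.
subst l; have [v hv] := other i.
rewrite (_ : X i * X i * (X i * 'X_[m3]) = (X i * X i - X v * X v) * (X i * 'X_[m3])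
                                          + (X i * X v) * (X v * 'X_[m3])); last by ring.
rewrite -add1n; apply: inImgD; apply: inImgM.
- exact: inImg_sq.
- by rewrite -XU -mpolyXD; apply: IH.
- by apply: inImg_XX => //; rewrite val_eqE eq_sym.
- by rewrite -XU -mpolyXD; apply: IH.
Qed.

Lemma mono_img k : k != 1%N -> forall m : 'X_{1..4}, mdeg m = (2 * k)%N -> inImg k ('X_[m] : P4).
Proof.
elim: k => [|k IH] hk m hm.
  have -> : m = 0%MM by apply/eqP; rewrite -mdeg_eq0 hm.
  by rewrite mpolyX0; exists 1; rewrite dhomog1 /T rmorph1.
case: k IH hk hm => [//|k] IH _ hm.
case: k IH hm => [|k] IH hm.
  have hposm : (0 < mdeg m)%N by rewrite hm.
  have [a [m1 [em h1]]] := mono_split hposm.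
  rewrite hm /= in h1.
  have hposm1 : (0 < mdeg m1)%N by rewrite h1.
  have [b [m2 [em1 h2]]] := mono_split hposm1.
  rewrite h1 /= in h2.
  have hposm2 : (0 < mdeg m2)%N by rewrite h2.
  have [c [m3 [em2 h3]]] := mono_split hposm2.
  rewrite h2 /= in h3.
  have hposm3 : (0 < mdeg m3)%N by rewrite h3.
  have [e [m4 [em3 h4]]] := mono_split hposm3.
  rewrite h3 /= in h4.
  have m40 : m4 = 0%MM by apply/eqP; rewrite -mdeg_eq0 h4.
  rewrite em em1 em2 em3 m40.
  rewrite addm0 !mpolyXD !XU !mulrA.
  by apply: base4.
apply: step => //; apply: IH => //.
Qed.

Lemma surjT k (P : P4) : k != 1%N -> P \is (2 * k).-homog -> inImg k P.
Proof.
move=> hk hP; rewrite (mpolyE P) big_seq; apply: inImg_sumc => m hm.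
apply: inImgZ; apply: mono_img => //.
exact: (dhomog_mf hP hm).
Qed.

End Mono.


Lemma freeP_cast (K : fieldType) (vT : vectType K) m (X : m.-tuple vT) n (a : 'I_n -> K) :
  free X -> m = n -> \sum_(i < n) a i *: X`_i = 0 -> forall i, a i = 0.
Proof. by move=> fX e; subst n; move/freeP: fX; apply. Qed.

Lemma sum_mxvec (V : nmodType) (G : 'I_(3 * 3) -> V) :
  \sum_k G k = \sum_(i < 3) \sum_(j < 3) G (mxvec_index i j).
Proof.
rewrite (reindex (uncurry (@mxvec_index 3 3))) /=; last first.
  by apply: onW_bij; apply: onT_bij; exact: curry_mxvec_bij.
by rewrite pair_big /=; apply: eq_bigr => -[i j].
Qed.

Lemma solve_b (F : numFieldType) (b : 'I_3 -> 'I_3 -> F) :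
  (forall w x y z, \sum_(i < 3) \sum_(j < 3) b i j * phiE w x y z i j = 0) -> forall i j, b i j = 0.
Proof.
move=> H.
pose b' (i j : nat) := b (inord i) (inord j).
pose E w x y z := \sum_(i < 3) \sum_(j < 3) b i j * phiE w x y z i j.
have EE w x y z : E w x y z = b' 0%N 0%N * phiE w x y z 0 0 + b' 0%N 1%N * phiE w x y z 0 1 + b' 0%N 2%N * phiE w x y z 0 2 + b' 1%N 0%N * phiE w x y z 1 0 + b' 1%N 1%N * phiE w x y z 1 1 + b' 1%N 2%N * phiE w x y z 1 2 + b' 2%N 0%N * phiE w x y z 2 0 + b' 2%N 1%N * phiE w x y z 2 1 + b' 2%N 2%N * phiE w x y z 2 2.
  by rewrite /E /b' !sum3 !inordK // !addrA.
have HE w x y z : E w x y z = 0 := H w x y z.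
have h00 : b' 0%N 0%N *+ 2 = E 1 0 0 0 + E 0 1 0 0 by rewrite !EE /=; ring.
rewrite !HE ?(mulr0, addr0, subrr, add0r) in h00; move/eqP: h00; rewrite mulrn_eq0 /= => /eqP h00.
have h11 : b' 1%N 1%N *+ 2 = E 1 0 0 0 + E 0 0 1 0 by rewrite !EE /=; ring.
rewrite !HE ?(mulr0, addr0, subrr, add0r) in h11; move/eqP: h11; rewrite mulrn_eq0 /= => /eqP h11.
have h22 : b' 2%N 2%N *+ 2 = E 1 0 0 0 + E 0 0 0 1 by rewrite !EE /=; ring.
rewrite !HE ?(mulr0, addr0, subrr, add0r) in h22; move/eqP: h22; rewrite mulrn_eq0 /= => /eqP h22.
have h21 : b' 2%N 1%N *+ 4 = E 1 1 0 0 + E 0 0 1 1 by rewrite !EE /=; ring.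
rewrite !HE ?(mulr0, addr0, subrr, add0r) in h21; move/eqP: h21; rewrite mulrn_eq0 /= => /eqP h21.
have h12 : b' 1%N 2%N *+ 4 = E 0 0 1 1 - E 1 1 0 0 + 2%:R * (E 1 0 0 0 + E 0 1 0 0) by rewrite !EE /=; ring.
rewrite !HE ?(mulr0, addr0, subrr, add0r) in h12; move/eqP: h12; rewrite mulrn_eq0 /= => /eqP h12.
have h02 : b' 0%N 2%N *+ 4 = E 1 0 1 0 + E 0 1 0 1 by rewrite !EE /=; ring.
rewrite !HE ?(mulr0, addr0, subrr, add0r) in h02; move/eqP: h02; rewrite mulrn_eq0 /= => /eqP h02.
have h20 : b' 2%N 0%N *+ 4 = E 0 1 0 1 - E 1 0 1 0 + 2%:R * (E 1 0 0 0 + E 0 0 1 0) by rewrite !EE /=; ring.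
rewrite !HE ?(mulr0, addr0, subrr, add0r) in h20; move/eqP: h20; rewrite mulrn_eq0 /= => /eqP h20.
have h10 : b' 1%N 0%N *+ 4 = E 1 0 0 1 + E 0 1 1 0 by rewrite !EE /=; ring.
rewrite !HE ?(mulr0, addr0, subrr, add0r) in h10; move/eqP: h10; rewrite mulrn_eq0 /= => /eqP h10.
have h01 : b' 0%N 1%N *+ 4 = E 0 1 1 0 - E 1 0 0 1 + 2%:R * (E 1 0 0 0 + E 0 0 0 1) by rewrite !EE /=; ring.
rewrite !HE ?(mulr0, addr0, subrr, add0r) in h01; move/eqP: h01; rewrite mulrn_eq0 /= => /eqP h01.
move=> i j; rewrite -(inord_val i) -(inord_val j).
by case: i => [[|[|[|i]]] hi] //; case: j => [[|[|[|j]]] hj].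
Qed.

Section Final.
Variable R : realType.
Local Notation C := (CC R).
Local Notation P9 := (poly9 R).

Lemma cone_iff (p : P9) : vanishes_on (@coneO3 R) p <->
  (forall c (M : 'M[C]_3), M^T *m M = 1%:M -> evalN p (c *: M) = 0).
Proof.
split.
  move=> h c M hM; apply: h => q hq; apply: hq; by exists c, M.
by move=> h N hN; apply: hN => M' [c [M [hM ->]]]; exact: h.
Qed.

Lemma vanish_T d (p : P9) : p \is d.-homog -> vanishes_on (@coneO3 R) p <-> T p = 0.
Proof.
move=> hp; split.
  by move/cone_iff; apply: key_lower.
by move=> hT; apply/cone_iff; apply: key_upper hp hT.
Qed.

Lemma T_lin n (a : 'I_n -> C) (ps : 'I_n -> P9) :
  T (\sum_i a i *: ps i) = \sum_i a i *: T (ps i).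
Proof. by rewrite /T raddf_sum; apply: eq_bigr => i _; exact: comp_mpolyZ. Qed.

Lemma homog_comb d n (a : 'I_n -> C) (ps : 'I_n -> P9) :
  (forall i, ps i \is d.-homog) -> \sum_i a i *: ps i \is d.-homog.
Proof. by move=> h; apply: rpred_sum => i _; apply: rpredZ. Qed.

Lemma val_comb d n (a : 'I_n -> C) (X : 'I_n -> dhomog 4 C d) :
  mpoly_of_dhomog (\sum_i a i *: X i) = \sum_i a i *: mpoly_of_dhomog (X i).
Proof. by rewrite raddf_sum; apply: eq_bigr => i _; exact: linearZ. Qed.

Lemma no_indep d n (U : {vspace dhomog 4 C (2 * d)}) : (\dim U <= n)%N ->
  (forall p : P9, p \is d.-homog -> exists w, (w \in U) && (mpoly_of_dhomog w == T p)) ->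
  forall ps : 'I_n.+1 -> P9, ~ indep_mod_cone d ps.
Proof.
move=> hU hsp ps [hh hind].
pose w i := xchoose (hsp _ (hh i)).
have hw i : (w i \in U) && (mpoly_of_dhomog (w i) == T (ps i)) := xchooseP (hsp _ (hh i)).
pose X := [tuple w i | i < n.+1].
have hX (i : 'I_n.+1) : X`_i = w i by rewrite -tnth_nth tnth_mktuple.
have fX : free X.
  apply/freeP => k hk i; apply: (hind k) i.
  apply/(vanish_T (homog_comb k hh)); rewrite T_lin.
  have e := congr1 (@mpoly_of_dhomog _ _ _) hk; rewrite val_comb raddf0 in e.
  transitivity (\sum_i k i *: mpoly_of_dhomog X`_i); last exact: e.
  by apply: eq_bigr => j _; rewrite hX; case/andP: (hw j) => _ /eqP ->.
have : (\dim <<X>> <= \dim U)%N.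
  apply: dimvS; apply/span_subvP => x /mapP [j _ ->].
  by case/andP: (hw j).
by rewrite (eqnP fX) size_tuple leqNgt ltnS hU.
Qed.

Lemma hsp_full d (p : P9) : p \is d.-homog ->
  exists w : dhomog 4 C (2 * d), (w \in (fullv : {vspace dhomog 4 C (2 * d)})) && (mpoly_of_dhomog w == T p).
Proof.
move=> hp; exists (@indhomog 4 C (2 * d) (T p)); rewrite memvf /=.
by rewrite /indhomog insubdK ?eqxx //; exact: T_homog.
Qed.

Lemma dim_full d : \dim (fullv : {vspace dhomog 4 C (2 * d)}) = 'C(2 * d + 3, 3).
Proof.
rewrite dimvf; transitivity 'C(2 * d + 3, 2 * d); first by [].
by rewrite -[X in 'C(_, X)](addnK 3 (2 * d)) bin_sub // leq_addl.
Qed.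

Lemma ex_indep d : d != 1%N -> exists ps : 'I_('C(2 * d + 3, 3)) -> P9, indep_mod_cone d ps.
Proof.
move=> hd.
pose B := vbasis (fullv : {vspace dhomog 4 C (2 * d)}).
have ex (w : dhomog 4 C (2 * d)) : exists p : P9, (p \is d.-homog) && (T p == mpoly_of_dhomog w).
  have [p [hp hT]] := surjT hd (dhomog_is_dhomog w).
  by exists p; rewrite hp hT eqxx.
pose ps (i : 'I_('C(2 * d + 3, 3))) := xchoose (ex B`_i).
have hps i : ps i \is d.-homog by case/andP: (xchooseP (ex B`_i)).
exists ps; split => // a /(vanish_T (homog_comb a hps)) h.
rewrite T_lin in h.
apply: (freeP_cast (basis_free (vbasisP fullv)) (dim_full d)).
have e : mpoly_of_dhomog (\sum_i a i *: B`_i) = mpoly_of_dhomog (0 : dhomog 4 C (2 * d)).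
  rewrite val_comb raddf0; transitivity (\sum_i a i *: T (ps i)); last exact: h.
  apply: eq_bigr => i _; congr (_ *: _).
  by case/andP: (xchooseP (ex B`_i)) => _ /eqP ->.
exact: val_inj e.
Qed.

Lemma val_combs d (I : Type) (r : seq I) (a : I -> C) (X : I -> dhomog 4 C d) :
  mpoly_of_dhomog (\sum_(i <- r) a i *: X i) = \sum_(i <- r) a i *: mpoly_of_dhomog (X i).
Proof. by rewrite raddf_sum; apply: eq_bigr => i _; exact: linearZ. Qed.

Lemma ex_indep1 : exists ps : 'I_(3 * 3) -> P9, indep_mod_cone 1 ps.
Proof.
have hX (k : 'I_(3 * 3)) : ('X_k : P9) \is 1.-homog.
  by rewrite dhomogX; apply/eqP; exact: mdeg1.
exists (fun k : 'I_(3 * 3) => 'X_k); split => // a /(vanish_T (homog_comb a hX)) h.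
rewrite T_lin in h.
have H w x y z : \sum_(i < 3) \sum_(j < 3) a (mxvec_index i j) * phiE w x y z i j = 0.
  pose v (i : 'I_4) := nth 0 [:: w; x; y; z] i.
  transitivity ((\sum_k a k *: T 'X_k).@[v]); last by rewrite h meval0.
  rewrite raddf_sum /= sum_mxvec; apply: eq_bigr => i _; apply: eq_bigr => j _.
  by rewrite mevalZ T_eval /evalN mevalXU mxvecE /PhiC mxE /v !inordK.
have hb := solve_b H.
by move=> k; case/mxvec_indexP: k => i j; exact: hb.
Qed.

Definition lqW : (3 * 3).-tuple (dhomog 4 C (2 * 1)) :=
  [tuple @indhomog 4 C (2 * 1) (tnth (lq C) k) | k < 3 * 3].

End Final.


Section F2.
Variable R : realType.
Local Notation C := (CC R).
Local Notation P9 := (poly9 R).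
Lemma hsp1 (p : P9) : p \is 1.-homog ->
  exists w, (w \in <<lqW R>>%VS) && (mpoly_of_dhomog w == T p).
Proof.
move=> hp; exists (@indhomog 4 C (2 * 1) (T p)).
have eT (q : P9) : q \is 1.-homog -> mpoly_of_dhomog (@indhomog 4 C (2 * 1) (T q)) = T q.
  by move=> hq; rewrite /indhomog insubdK //; exact: T_homog.
rewrite eT // eqxx andbT.
have hXm m : m \in msupp p -> ('X_[m] : P9) \is 1.-homog.
  by move=> hm; rewrite dhomogX (dhomog_mf hp hm).
have ev : mpoly_of_dhomog (@indhomog 4 C (2 * 1) (T p)) =
    mpoly_of_dhomog (\sum_(m <- msupp p) p@_m *: @indhomog 4 C (2 * 1) (T 'X_[m])).
  rewrite val_combs; transitivity (T p); first exact: (eT p hp).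
  rewrite {1}(mpolyE p).
  rewrite /T raddf_sum /= big_seq [RHS]big_seq; apply: eq_bigr => m hm.
  rewrite comp_mpolyZ; congr (_ *: _); symmetry; exact: (eT _ (hXm m hm)).
rewrite (val_inj ev).

rewrite big_seq.
apply: memv_suml => m hm; apply: memvZ.
have [k /eqP ->] : exists k, m == (U_(k))%MM by apply/mdeg1P; rewrite (dhomog_mf hp hm).
apply: memv_span.
have -> : @indhomog 4 C (2 * 1) (T 'X_k) = tnth (lqW R) k.
  by rewrite tnth_mktuple /T comp_mpolyXU -tnth_nth.
exact: mem_tnth.
Qed.

End F2.

Close Scope ring_scope.

Section Num.
Local Open Scope ring_scope.

Lemma f6 n : ('C(n.*2 + 3, 3) * 6 = (n.*2 + 3) * (n.*2 + 2) * (n.*2 + 1))%N.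
Proof.
have -> : (6 = 3`!)%N by [].
rewrite bin_ffact !ffactnS ffactn0 muln1 -!subn1 mulnA.
congr (_ * _ * _)%N; lia.
Qed.
Definition hh (d : nat) := ('C(d.*2 + 3, 3) - (d == 1%N))%N.
Lemma small : forall d, (d <= 5)%N -> (\sum_(k < 5 | (k <= d)%N)
          (-1) ^+ k * ('C(4, k))%:Z * (hh (d - k)%N)%:Z)%R
       = nth 0%R [:: 1; 5; 5; (-6); 4; (-1)]%R d.
Proof.
move=> d hd. do 6 (case: d hd => [|d] hd; first by rewrite big_mkcond !big_ord_recl big_ord0 /=; vm_compute).
by [].
Qed.
Lemma f6z n : ('C(n.*2 + 3, 3))%:Z * 6 = (2 * n%:Z + 3) * (2 * n%:Z + 2) * (2 * n%:Z + 1).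
Proof. by rewrite -PoszM f6 -mul2n !(PoszM, PoszD). Qed.

Lemma big_d e : (\sum_(k < 5 | (k <= e.+4.+2)%N)
          (-1) ^+ k * ('C(4, k))%:Z * (hh (e.+4.+2 - k)%N)%:Z)%R = 0.
Proof.
rewrite big_mkcond !big_ord_recl big_ord0 /= /hh /bump /= !subSS !subn0 /=.
apply: (@mulIf _ 6) => //; rewrite mul0r !mulrDl.
have e6 : forall x y z : int, x * y * z * 6 = x * y * (z * 6) by move=> *; ring.
rewrite !e6 !f6z !intS; ring.
Qed.

End Num.

Lemma dim_all (R : realType) d : dim_coord_ring_deg R d (hh d).
Proof.
have [->|hd] := eqVneq d 1%N.
  change (dim_coord_ring_deg R 1 (3 * 3)); split; first exact: ex_indep1.
  move=> ps; apply: (@no_indep R 1 (3 * 3) <<lqW R>>%VS).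
    by rewrite (leq_trans (dim_span _)) // size_tuple.
  exact: hsp1.
rewrite /hh (negbTE hd) subn0 -mul2n; split; first exact: ex_indep.
move=> ps; apply: (@no_indep R d _ fullv); first by rewrite dim_full.
exact: hsp_full.
Qed.

Theorem theorem3p2 (R : realType) :
  exists h : nat -> nat,
    (forall d, dim_coord_ring_deg R d (h d)) /\
    (forall d, h d = ('C(d.*2 + 3, 3) - (d == 1%N))%N) /\
    (forall d : nat,
       (\sum_(k < 5 | (k <= d)%N)
          (-1) ^+ k * ('C(4, k))%:Z * (h (d - k)%N)%:Z)%R
       = nth 0%R [:: 1; 5; 5; (-6); 4; (-1)]%R d).
Proof.
exists hh; split; first exact: dim_all.
split => // d.
have [hd|hd] := leqP d 5; first exact: small.
have [e ->] : exists e, d = e.+4.+2 by exists (d - 6)%N; lia.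
by rewrite big_d nth_default.
Qed.
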